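(* Suppose assumptions (A1)–(A5) below hold. Then the feasible region of the maximum likelihood estimation problem $$\max_{(x_t,\theta_t,u_t)}\ \sum_{i=0}^{n_x}\log p_\nu(\tilde x_{t_i}-Dx_{t_i})+\sum_{j=0}^{n_u}\log p_\omega(\tilde y_{\tau_j}-Cu_{\tau_j})$$ subject to, for all $t$: $u_t\in\arg\max\{f(x_{t+1},u,\theta_t,\pi_t): x_{t+1}=h(x_t,u),\ u\in\mathcal U\}$, $x_{t+1}=h(x_t,u_t)$, $\theta_{t+1}=g(x_t,u_t,\theta_t,\pi_t)$, $x_t\in\mathcal X$, $\theta_t\in\Theta$, can be formulated as a set of mixed integer linear constraints with respect to $(x_t,u_t,\theta_t,\pi_t)$ (possibly with additional auxiliary variables).
   Context: Model. Let $\mathcal X,\mathcal U,\Pi,\Theta$ be compact finite-dimensional sets with $\mathcal X,\mathcal U,\Theta$ convex. At each discrete time $t$ an agent has system state $x_t\in\mathcal X$, motivational state $\theta_t\in\Theta$, decision $u_t\in\mathcal U$; a coordinator applies incentive $\pi_t\in\Pi$. Decisions and states obey the constraints displayed in the claim. Observations: $\tilde x_{t_i}=Dx_{t_i}+\nu_{t_i}$ ($i=0,\dots,n_x$), $\tilde y_{\tau_i}=Cu_{\tau_i}+\omega_{\tau_i}$ ($i=0,\dots,n_u$), $C,D$ known matrices, $p_\nu,p_\omega$ the noise densities. $(a;b)$ denotes vertical concatenation. Assumptions: (A1) $\mathcal X,\mathcal U,\Pi,\Theta$ bounded finite-dimensional; $\mathcal X,\mathcal U,\Theta$ convex polyhedra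 described by finitely many linear inequalities; $\Pi$ described by finitely many mixed integer linear constraints. (A2) $f:\mathcal X\times\mathcal U\times\Theta\times\Pi\to\mathbb R$ deterministic, concave in $x$, strictly concave in $u$, concave in $\theta$, and $f(x,u,\theta,\pi)=-(x;u)^TQ(x;u)+(\theta;\pi)^TH(x;u)+\sum_{i=1}^K\min_{j\in J_i}\{F_{i,j}(x;u;\theta;\pi)+\zeta_{i,j}\}$ with $Q$ positive semidefinite, matrices $H,F_{i,j}$, scalars $\zeta_{i,j}$, finite index sets $J_i$. (A3) $h,g$ deterministic surjective with $h(x,u)=Ax+Bu+k$ and $g(x,u,\theta,\pi)=G_i(x;u;\theta;\pi)+\chi_i$ whenever $B_i(x;u;\theta;\pi)\le\psi_i$ (finitely many $i$; matrices $A,B,G_i,B_i$; constants $k,\psi_i,\chi_i$), the polytopes $\{B_i(x;u;\theta;\pi)\le\psi_i\}$ having disjoint interiors. (A4) The noises $\{\nu_{t_i}\},\{\omega_{\tau_i}\}$ are i.i.d. sequences of random vectors with i.i.d. components, zero mean and known finite variance, and $\log p_\nu,\log p_\omega$ are expressible using integer linear constraints. (A5) Observability: there exist $T$ and an incentive sequence such that the initial condition $(x_0,\theta_0)$ can be computed exactly from noiseless measurements on $0\le t\le T$. *)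

(* Defs.v *)
From HB Require Import structures.
From mathcomp Require Import all_boot all_order all_algebra.
From mathcomp Require Import reals.
Set Implicit Arguments. Unset Strict Implicit. Unset Printing Implicit Defensive.
Import Order.TTheory GRing.Theory Num.Theory.
Local Open Scope ring_scope.

Section Defs.
Variable R : realType.

Definition mxle m n (A B : 'M[R]_(m, n)) := forall i j, A i j <= B i j.

Definition polyhedron n (S : 'cV[R]_n -> Prop) :=
  exists k (M : 'M[R]_(k, n)) (b : 'cV[R]_k), forall v, S v <-> mxle (M *m v) b.

Definition bounded_set n (S : 'cV[R]_n -> Prop) :=
  exists c : R, forall v, S v -> forall i, `|v i 0| <= c.

Definition closed_set n (S : 'cV[R]_n -> Prop) :=
  forall v : 'cV[R]_n, (forall e : R, 0 < e -> exists w, S w /\ forall i, `|w i 0 - v i 0| < e) -> S v.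

Definition interior_pt n (S : 'cV[R]_n -> Prop) (v : 'cV[R]_n) :=
  exists e : R, 0 < e /\ forall w : 'cV[R]_n, (forall i, `|w i 0 - v i 0| < e) -> S w.

Definition intvec p (z : 'cV[int]_p) : 'cV[R]_p := map_mx (fun k : int => k%:~R) z.

Definition milp_set n (S : 'cV[R]_n -> Prop) :=
  exists k mw mz (A : 'M[R]_(k, n)) (Bw : 'M[R]_(k, mw)) (Bz : 'M[R]_(k, mz)) (b : 'cV[R]_k),
    forall v, S v <-> exists w z, mxle (A *m v + Bw *m w + Bz *m intvec z) b.

Definition psd n (Q : 'M[R]_n) := forall v : 'cV[R]_n, 0 <= (v^T *m Q *m v) 0 0.

Definition concave_on n (S : 'cV[R]_n -> Prop) (phi : 'cV[R]_n -> R) :=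
  forall a b l, S a -> S b -> 0 <= l <= 1 ->
    l * phi a + (1 - l) * phi b <= phi (l *: a + (1 - l) *: b).

Definition strictly_concave_on n (S : 'cV[R]_n -> Prop) (phi : 'cV[R]_n -> R) :=
  forall a b l, S a -> S b -> a <> b -> 0 < l < 1 ->
    l * phi a + (1 - l) * phi b < phi (l *: a + (1 - l) *: b).

Variables nx nu nth npi : nat.
Notation X_t := 'cV[R]_nx.
Notation U_t := 'cV[R]_nu.
Notation Th_t := 'cV[R]_nth.
Notation Pi_t := 'cV[R]_npi.

Definition f_form (f : X_t -> U_t -> Th_t -> Pi_t -> R) :=
  exists (Q : 'M[R]_(nx + nu)) (H : 'M[R]_(nth + npi, nx + nu)) (K : nat)
         (Js : 'I_K -> nat)
         (F : forall i : 'I_K, 'I_(Js i).+1 -> 'rV[R]_((nx + nu) + (nth + npi)))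
         (zeta : forall i : 'I_K, 'I_(Js i).+1 -> R),
    psd Q /\
    forall x u th pi,
      f x u th pi =
        - ((col_mx x u)^T *m Q *m col_mx x u) 0 0
        + ((col_mx th pi)^T *m H *m col_mx x u) 0 0
        + \sum_(i < K)
            (let e := fun j : 'I_(Js i).+1 =>
                 (F i j *m col_mx (col_mx x u) (col_mx th pi)) 0 0 + zeta i j in
             \big[Num.min/e ord0]_(j < (Js i).+1) e j).

Definition h_affine (h : X_t -> U_t -> X_t) :=
  exists (A : 'M[R]_nx) (B : 'M[R]_(nx, nu)) (k : X_t),
    forall x u, h x u = A *m x + B *m u + k.

Definition g_pwa (X : X_t -> Prop) (U : U_t -> Prop) (Th : Th_t -> Prop) (Pi : Pi_t -> Prop)
    (g : X_t -> U_t -> Th_t -> Pi_t -> Th_t) :=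
  exists (P : nat) (mB : 'I_P -> nat)
         (Bp : forall i : 'I_P, 'M[R]_(mB i, (nx + nu) + (nth + npi)))
         (psi : forall i : 'I_P, 'cV[R]_(mB i))
         (G : 'I_P -> 'M[R]_(nth, (nx + nu) + (nth + npi)))
         (chi : 'I_P -> Th_t),
    let piece i := fun v => mxle (Bp i *m v) (psi i) in
    (forall i x u th pi,
        piece i (col_mx (col_mx x u) (col_mx th pi)) ->
        g x u th pi = G i *m col_mx (col_mx x u) (col_mx th pi) + chi i) /\
    (forall i j v, i <> j -> interior_pt (piece i) v -> interior_pt (piece j) v -> False) /\
    (forall x u th pi, X x -> U u -> Th th -> Pi pi ->
        exists i, piece i (col_mx (col_mx x u) (col_mx th pi))).

Definition argmax_u (U : U_t -> Prop) (f : X_t -> U_t -> Th_t -> Pi_t -> R)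
    (h : X_t -> U_t -> X_t) (x : X_t) (th : Th_t) (pi : Pi_t) (u : U_t) :=
  U u /\ forall u', U u' -> f (h x u') u' th pi <= f (h x u) u th pi.

Definition feasible (X : X_t -> Prop) (U : U_t -> Prop) (Th : Th_t -> Prop) (Pi : Pi_t -> Prop)
    (f : X_t -> U_t -> Th_t -> Pi_t -> R) (h : X_t -> U_t -> X_t)
    (g : X_t -> U_t -> Th_t -> Pi_t -> Th_t) (N : nat)
    (x : nat -> X_t) (u : nat -> U_t) (th : nat -> Th_t) (pi : nat -> Pi_t) :=
  forall t, (t <= N)%N ->
    [/\ argmax_u U f h (x t) (th t) (pi t) (u t), X (x t), Th (th t), Pi (pi t) &
        ((t < N)%N -> x t.+1 = h (x t) (u t) /\ th t.+1 = g (x t) (u t) (th t) (pi t))].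

Definition milp_traj (N : nat)
    (S : (nat -> X_t) -> (nat -> U_t) -> (nat -> Th_t) -> (nat -> Pi_t) -> Prop) :=
  exists k mw mz (Ax : nat -> 'M[R]_(k, nx)) (Au : nat -> 'M[R]_(k, nu))
         (Ath : nat -> 'M[R]_(k, nth)) (Api : nat -> 'M[R]_(k, npi))
         (Bw : 'M[R]_(k, mw)) (Bz : 'M[R]_(k, mz)) (b : 'cV[R]_k),
    forall x u th pi,
      S x u th pi <->
      exists (w : 'cV[R]_mw) (z : 'cV[int]_mz),
        mxle (\sum_(t < N.+1) (Ax t *m x t + Au t *m u t + Ath t *m th t + Api t *m pi t)
              + Bw *m w + Bz *m intvec z) b.

Definition observable (X : X_t -> Prop) (U : U_t -> Prop) (Th : Th_t -> Prop) (Pi : Pi_t -> Prop)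
    (f : X_t -> U_t -> Th_t -> Pi_t -> R) (h : X_t -> U_t -> X_t)
    (g : X_t -> U_t -> Th_t -> Pi_t -> Th_t)
    pd pc (D : 'M[R]_(pd, nx)) (C : 'M[R]_(pc, nu))
    nmx nmu (tm : 'I_nmx.+1 -> nat) (tau : 'I_nmu.+1 -> nat) :=
  exists (T : nat) (pis : nat -> Pi_t),
    (forall t, (t <= T)%N -> Pi (pis t)) /\
    forall x u th x' u' th',
      feasible X U Th Pi f h g T x u th pis ->
      feasible X U Th Pi f h g T x' u' th' pis ->
      (forall i, (tm i <= T)%N -> D *m x (tm i) = D *m x' (tm i)) ->
      (forall i, (tau i <= T)%N -> C *m u (tau i) = C *m u' (tau i)) ->
      x 0%N = x' 0%N /\ th 0%N = th' 0%N.

End Defs.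

(* Main.v *)
Require Import Defs.
From HB Require Import structures.
From mathcomp Require Import all_boot all_order all_algebra.
From mathcomp Require Import reals.
From mathcomp Require Import ring lra zify.
From Stdlib Require Import Classical FunctionalExtensionality.
Import Order.TTheory GRing.Theory Num.Theory.
Local Open Scope ring_scope.

Set Implicit Arguments. Unset Strict Implicit. Unset Printing Implicit Defensive.

Section Farkas.
Variable R : realFieldType.

Definition dot n (a : 'rV[R]_n) (d : 'cV[R]_n) : R := (a *m d) 0 0.

Lemma dotDl n (a b : 'rV[R]_n) d : dot (a + b) d = dot a d + dot b d.
Proof. by rewrite /dot mulmxDl mxE. Qed.
Lemma dotDr n (a : 'rV[R]_n) d e : dot a (d + e) = dot a d + dot a e.
Proof. by rewrite /dot mulmxDr mxE. Qed.
Lemma dotZl n k (a : 'rV[R]_n) d : dot (k *: a) d = k * dot a d.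
Proof. by rewrite /dot -scalemxAl mxE. Qed.
Lemma dotZr n k (a : 'rV[R]_n) d : dot a (k *: d) = k * dot a d.
Proof. by rewrite /dot -scalemxAr mxE. Qed.
Lemma dotNl n (a : 'rV[R]_n) d : dot (- a) d = - dot a d.
Proof. by rewrite /dot mulNmx mxE. Qed.
Lemma dotNr n (a : 'rV[R]_n) d : dot a (- d) = - dot a d.
Proof. by rewrite /dot mulmxN mxE. Qed.
Lemma dotBl n (a b : 'rV[R]_n) d : dot (a - b) d = dot a d - dot b d.
Proof. by rewrite dotDl dotNl. Qed.
Lemma dotBr n (a : 'rV[R]_n) d e : dot a (d - e) = dot a d - dot a e.
Proof. by rewrite dotDr dotNr. Qed.
Lemma dot_suml n (I : finType) (l : I -> R) (a : I -> 'rV[R]_n) d :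
  dot (\sum_i l i *: a i) d = \sum_i l i * dot (a i) d.
Proof.
rewrite /dot mulmx_suml summxE; apply: eq_bigr => i _.
by rewrite -scalemxAl mxE.
Qed.

Lemma farkas_base n (c : 'rV[R]_n) : (forall d, dot c d <= 0) -> c = 0.
Proof.
move=> H; have := H c^T.
rewrite /dot mxE => Hs.
have Hge : forall j : 'I_n, true -> 0 <= c 0 j * c^T j 0.
  by move=> j _; rewrite mxE -expr2 sqr_ge0.
have H0 : \sum_j c 0 j * c^T j 0 = 0.
  by apply/eqP; rewrite eq_le Hs sumr_ge0.
apply/matrixP => i j; rewrite (ord1 i) mxE.
have := psumr_eq0P Hge H0 (i:=j) erefl.
by rewrite mxE -expr2 => /eqP; rewrite sqrf_eq0 => /eqP.
Qed.

Theorem farkas (I : finType) k : forall (P : pred I) (a : I -> 'rV[R]_k) (c : 'rV[R]_k),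
  (forall d, (forall i, P i -> dot (a i) d <= 0) -> dot c d <= 0) ->
  exists l : I -> R, [/\ forall i, 0 <= l i, forall i, ~~ P i -> l i = 0 &
     c = \sum_i l i *: a i].
Proof.
move=> P; move Hm: #|P| => m; elim: m P Hm => [|m IH] P Hm a c Hc.
  exists (fun _ => 0); split => //.
  rewrite big1; last by move=> i _; rewrite scale0r.
  apply: farkas_base => d; apply: Hc => i Pi.
  by move/card0_eq: Hm => /(_ i); rewrite /in_mem /= Pi.
have [i0 Pi0] : exists i0, P i0.
  case: (pickP P) => [x Px|H0]; first by exists x.
  by move: Hm; rewrite (eq_card0 H0).
set P' := [pred i | (i != i0) && P i].
have HP' : #|P'| = m.
  move: Hm; rewrite (cardD1 i0) /in_mem /= Pi0 add1n => -[<-].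
  by apply: eq_card => i; rewrite !inE.
case: (classic (forall d, (forall i, P' i -> dot (a i) d <= 0) -> dot c d <= 0)) => Hc'.
  have [l [l0 lP lc]] := IH P' HP' a c Hc'.
  exists l; split => // i Pi; apply: lP; rewrite /P' /= (negbTE Pi) andbF //.
have [d0 Hd0] : exists d0, (forall i, P' i -> dot (a i) d0 <= 0) /\ 0 < dot c d0.
  apply: NNPP => Hn; apply: Hc' => d Hd; apply: NNPP => Hlt; apply: Hn.
  by exists d; split => //; rewrite ltNge; apply/negP.
case: Hd0 => Hd0 Hcd0.
set al := dot (a i0) d0.
have Hal : 0 < al.
  rewrite ltNge; apply/negP => Hle.
  have : dot c d0 <= 0.
    apply: Hc => i Pi; case: (eqVneq i i0) => [->//|ne].
    by apply: Hd0; rewrite /P' /= ne Pi.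
  by rewrite leNgt Hcd0.
set a' := fun i => a i - (dot (a i) d0 / al) *: a i0.
set c' := c - (dot c d0 / al) *: a i0.
have key : forall b d, dot (b - (dot b d0 / al) *: a i0) d
                    = dot b (d - (dot (a i0) d / al) *: d0).
  move=> b d; rewrite dotBl dotBr dotZl dotZr.
  congr (_ - _); rewrite mulrAC [RHS]mulrAC; congr (_ * _); exact: mulrC.
have Hc'' : forall d, (forall i, P' i -> dot (a' i) d <= 0) -> dot c' d <= 0.
  move=> d Hd; rewrite /c' key; apply: Hc => i Pi.
  case: (eqVneq i i0) => [->|ne].
    by rewrite dotBr dotZr -/al divfK ?subrr // gt_eqF.
  by rewrite -key; apply: Hd; rewrite /P' /= ne Pi.
have [l [l0 lP lc]] := IH P' HP' a' c' Hc''.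
set mu := (dot c d0 - \sum_i l i * dot (a i) d0) / al.
have Hs : \sum_i l i * dot (a i) d0 <= 0.
  rewrite -oppr_ge0 -sumrN; apply: sumr_ge0 => i _.
  case HPi: (P' i).
    by rewrite -mulrN mulr_ge0 // oppr_ge0 Hd0.
  by rewrite lP ?HPi // mul0r oppr0.
have Hmu : 0 <= mu.
  rewrite /mu; apply: divr_ge0; last exact: ltW.
  by rewrite subr_ge0 (le_trans Hs) ?ltW.
exists (fun i => l i + (if i == i0 then mu else 0)); split.
- by move=> i; case: eqP => _; rewrite ?addr0 ?addr_ge0.
- move=> i Pi; have ne : i != i0 by apply: contraNneq Pi => ->.
  by rewrite (negbTE ne) addr0 lP // /P' /= (negbTE Pi) andbF.
- have -> : c = c' + (dot c d0 / al) *: a i0 by rewrite /c' subrK.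
  rewrite lc /a'.
  under eq_bigr => i _ do rewrite scalerBr.
  rewrite sumrB.
  under [X in _ = X]eq_bigr => i _ do rewrite scalerDl.
  rewrite big_split /=.
  rewrite -addrA; congr (_ + _).
  rewrite [RHS](eq_bigr (fun i => if i == i0 then mu *: a i else 0)); last first.
    by move=> i _; case: (i == i0); rewrite ?scale0r.
  rewrite -big_mkcond /= big_pred1_eq.
  under eq_bigr => i _ do rewrite scalerA.
  rewrite -scaler_suml /mu mulrBl scalerBl addrC.
  congr (_ - _); congr (_ *: _); rewrite mulr_suml; apply: eq_bigr => i _; by rewrite mulrA.
Qed.
End Farkas.



Section KKT.
Unset Implicit Arguments.
Variable R : realType.
Variables nx nu nh npi : nat.
Variable Q : 'M[R]_(nx + nu).
Variable H : 'M[R]_(nh + npi, nx + nu).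
Variable K : nat.
Variable Js : 'I_K -> nat.
Variable F : forall i : 'I_K, 'I_(Js i).+1 -> 'rV[R]_((nx + nu) + (nh + npi)).
Variable zeta : forall i : 'I_K, 'I_(Js i).+1 -> R.
Variable A : 'M[R]_nx.
Variable B : 'M[R]_(nx, nu).
Variable kk : 'cV[R]_nx.

Definition wvec (x : 'cV[R]_nx) (u : 'cV[R]_nu) := col_mx (A *m x + B *m u + kk) u.
Definition Pm : 'M[R]_(nx + nu, nu) := col_mx B 1%:M.
Definition ee (x : 'cV[R]_nx) (u : 'cV[R]_nu) (th : 'cV[R]_nh) (pi : 'cV[R]_npi) (i : 'I_K) (j : 'I_(Js i).+1) :=
  (F i j *m col_mx (wvec x u) (col_mx th pi)) 0 0 + zeta i j.
Definition mn (x : 'cV[R]_nx) (u : 'cV[R]_nu) (th : 'cV[R]_nh) (pi : 'cV[R]_npi) i :=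
  \big[Num.min/ee x u th pi i ord0]_(j < (Js i).+1) ee x u th pi i j.
Definition qf (x : 'cV[R]_nx) (u : 'cV[R]_nu) (th : 'cV[R]_nh) (pi : 'cV[R]_npi) :=
  - ((wvec x u)^T *m Q *m wvec x u) 0 0 + ((col_mx th pi)^T *m H *m wvec x u) 0 0.
Definition phi (x : 'cV[R]_nx) (u : 'cV[R]_nu) (th : 'cV[R]_nh) (pi : 'cV[R]_npi) := qf x u th pi + \sum_i mn x u th pi i.
Definition gcol (x : 'cV[R]_nx) (u : 'cV[R]_nu) (th : 'cV[R]_nh) (pi : 'cV[R]_npi) : 'cV[R]_nu :=
  - ((Pm^T *m (Q + Q^T)^T) *m wvec x u) + (Pm^T *m H^T) *m col_mx th pi.
Definition rr (i : 'I_K) (j : 'I_(Js i).+1) : 'rV[R]_nu := F i j *m col_mx Pm 0.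

Lemma wvec_lin x u e d : wvec x (u + e *: d) = wvec x u + e *: (Pm *m d).
Proof.
rewrite /wvec /Pm mul_col_mx mul1mx scale_col_mx add_col_mx.
by rewrite mulmxDr -scalemxAr -!addrA [e *: (B *m d) + kk]addrC.
Qed.

Lemma m11 (M : 'M[R]_1) : M^T 0 0 = M 0 0.
Proof. by rewrite mxE. Qed.

Lemma eB m n (M1 M2 : 'M[R]_(m, n)) i j : (M1 - M2) i j = M1 i j - M2 i j.
Proof. by rewrite !mxE. Qed.
Lemma eDZ m n (M1 M2 : 'M[R]_(m, n)) e i j : (M1 + e *: M2) i j = M1 i j + e * M2 i j.
Proof. by rewrite !mxE. Qed.
Lemma dotE n (a : 'rV[R]_n) d : dot a d = \sum_l a 0 l * d l 0.
Proof. by rewrite /dot mxE. Qed.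
Lemma mulE m n (M : 'M[R]_(m, n)) (d : 'cV[R]_n) k : (M *m d) k 0 = \sum_l M k l * d l 0.
Proof. by rewrite mxE. Qed.
Lemma e00D (M1 M2 : 'M[R]_1) : (M1 + M2) 0 0 = M1 0 0 + M2 0 0.
Proof. by rewrite mxE. Qed.
Lemma e00N (M1 : 'M[R]_1) : (- M1) 0 0 = - M1 0 0.
Proof. by rewrite mxE. Qed.
Lemma e00Z e (M1 : 'M[R]_1) : (e *: M1) 0 0 = e * M1 0 0.
Proof. by rewrite mxE. Qed.

Lemma qf_lin x u th pi e d :
  qf x (u + e *: d) th pi = qf x u th pi + e * dot (gcol x u th pi)^T d
     - e ^+ 2 * (((Pm *m d)^T *m Q *m (Pm *m d)) 0 0).
Proof.
rewrite /qf wvec_lin /dot /gcol.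
set w := wvec x u; set p := col_mx th pi.
rewrite !linearD /= ?linearN ?linearZ /= !trmx_mul !trmxK.
rewrite !linearD /= !trmx_mul !trmxK.
rewrite !(mulmxDl, mulmxDr, mulNmx, mulmxN) -?scalemxAl -?scalemxAr !mulmxA.
rewrite !(e00D, e00N, e00Z).
have -> : (d^T *m Pm^T *m Q *m w) 0 0 = (w^T *m Q^T *m Pm *m d) 0 0.
  by rewrite -m11 !trmx_mul !trmxK !mulmxA.
ring.
Qed.

Lemma ee_lin x u th pi i j e d :
  ee x (u + e *: d) th pi i j = ee x u th pi i j + e * dot (rr i j) d.
Proof.
rewrite /ee /rr /dot wvec_lin.
have -> : col_mx (wvec x u + e *: (Pm *m d)) (col_mx th pi)
   = col_mx (wvec x u) (col_mx th pi) + e *: (col_mx Pm 0 *m d).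
  by rewrite [col_mx Pm 0 *m d]mul_col_mx mul0mx scale_col_mx add_col_mx scaler0 addr0.
by rewrite mulmxDr -scalemxAr mulmxA e00D e00Z; ring.
Qed.

Lemma bigmin_le_seq (I : eqType) (s : seq I) (x0 : R) (G : I -> R) j :
  j \in s -> \big[Num.min/x0]_(i <- s) G i <= G j.
Proof.
elim: s => [|a s IH] //; rewrite inE big_cons => /orP [/eqP <-|hj].
  by rewrite ge_min lexx.
by rewrite ge_min IH ?orbT.
Qed.

Lemma mn_le x u th pi i j : mn x u th pi i <= ee x u th pi i j.
Proof. by apply: bigmin_le_seq; rewrite mem_index_enum. Qed.

Lemma mn_ge x u th pi i lb : (forall j, lb <= ee x u th pi i j) -> lb <= mn x u th pi i.
Proof.
move=> h; rewrite /mn; apply: (big_ind (fun y => lb <= y)) => //.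
by move=> a b ha hb; rewrite le_min ha hb.
Qed.

Notation sig := {i : 'I_K & 'I_(Js i).+1}.

Lemma sum_tag (G : sig -> R) :
  \sum_i \sum_(s : sig) (if tag s == i then G s else 0) = \sum_s G s.
Proof.
rewrite exchange_big /=; apply: eq_bigr => s _.
rewrite -big_mkcond /= (eq_bigl (fun i => i == tag s)); last by move=> i; rewrite eq_sym.
by rewrite big_pred1_eq.
Qed.

Variable kU : nat.
Variable MU : 'M[R]_(kU, nu).
Variable bU : 'cV[R]_kU.

Definition KKT x u th pi (SA : {set 'I_kU}) (SJ : {set sig}) (lam : 'I_kU -> R) (mu : sig -> R) :=
 [/\ forall k, if k \in SA then 0 <= lam k /\ (MU *m u) k 0 = bU k 0 else lam k = 0,
     forall s, if s \in SJ then 0 <= mu s /\ (forall j', ee x u th pi (tag s) (tagged s) <= ee x u th pi (tag s) j')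
               else mu s = 0,
     forall i, \sum_s (if tag s == i then mu s else 0) = 1 &
     forall l, gcol x u th pi l 0 + \sum_s mu s * rr (tag s) (tagged s) 0 l = \sum_k lam k * MU k l].

Lemma kkt_suff x u th pi SA SJ lam mu u' : psd Q -> KKT x u th pi SA SJ lam mu ->
  (forall k, (MU *m u') k 0 <= bU k 0) -> phi x u' th pi <= phi x u th pi.
Proof.
move=> hQ [h1 h2 h3 h4] hu'.
set d := u' - u.
have eu : u' = u + 1 *: d by rewrite scale1r /d addrC subrK.
have Hmu0 : forall s, 0 <= mu s by move=> s; have := h2 s; case: (s \in SJ) => [[]|->].
have Hmin : forall i, mn x u' th pi i <= \sum_s (if tag s == i then mu s * ee x u' th pi (tag s) (tagged s) else 0).
  move=> i; rewrite -[mn _ _ _ _ _]mul1r -(h3 i) mulr_suml; apply: ler_sum => s _.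
  case: eqP => [<-|_]; last by rewrite mul0r.
  by rewrite ler_wpM2l // mn_le.
have Heq : \sum_s mu s * ee x u th pi (tag s) (tagged s) = \sum_i mn x u th pi i.
  rewrite -sum_tag; apply: eq_bigr => i _.
  rewrite -[mn _ _ _ _ _]mul1r -(h3 i) mulr_suml; apply: eq_bigr => s _.
  case: eqP => [<-|_]; last by rewrite mul0r.
  have := h2 s; case: (s \in SJ) => [[_ hs]|->]; last by rewrite !mul0r.
  congr (_ * _); apply/eqP; rewrite eq_le mn_le andbT; exact: mn_ge.
have HQ : 0 <= ((Pm *m d)^T *m Q *m (Pm *m d)) 0 0 by apply: hQ.
have Hlam : \sum_k lam k * (MU *m d) k 0 <= 0.
  rewrite -oppr_ge0 -sumrN; apply: sumr_ge0 => k _.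
  have := h1 k; case: (k \in SA) => [[hl he]|->]; last by rewrite mul0r oppr0.
  rewrite -mulrN mulr_ge0 // /d mulmxBr eB he oppr_ge0 subr_le0; exact: hu'.
have Hst : dot (gcol x u th pi)^T d + \sum_s mu s * dot (rr (tag s) (tagged s)) d
         = \sum_k lam k * (MU *m d) k 0.
  have E1 : \sum_s mu s * dot (rr (tag s) (tagged s)) d
      = \sum_l (\sum_s mu s * rr (tag s) (tagged s) 0 l) * d l 0.
    under eq_bigr => s _ do rewrite dotE mulr_sumr.
    rewrite exchange_big; apply: eq_bigr => l _; rewrite mulr_suml; apply: eq_bigr => s _; ring.
  have E2 : \sum_k lam k * (MU *m d) k 0 = \sum_l (\sum_k lam k * MU k l) * d l 0.
    under eq_bigr => k _ do rewrite mulE mulr_sumr.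
    rewrite exchange_big; apply: eq_bigr => l _; rewrite mulr_suml; apply: eq_bigr => s _.
    by rewrite mulrA.
  rewrite E1 E2 dotE -big_split /=; apply: eq_bigr => l _; rewrite -h4 [(gcol _ _ _ _)^T 0 l]mxE; ring.
have Hs : \sum_i mn x u' th pi i <= \sum_i mn x u th pi i + \sum_s mu s * dot (rr (tag s) (tagged s)) d.
  apply: le_trans (ler_sum _ (fun i _ => Hmin i)) _.
  rewrite sum_tag -Heq -big_split /= le_eqVlt; apply/orP; left; apply/eqP/eq_bigr => s _.
  by rewrite eu ee_lin mul1r mulrDr.
rewrite /phi {1}eu qf_lin expr1n !mul1r.
move: Hs Hst Hlam HQ; set a := \sum_i mn x u' th pi i; set b := \sum_i mn x u th pi i.
set c1 := dot _ d; set c2 := \sum_s _; set c3 := \sum_k _; set c4 := (_ *m _) 0 0.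
move=> *; lra.
Qed.


Lemma small_eps (T : finType) (al be : T -> R) : (forall i, 0 < be i) ->
  exists e, 0 < e /\ forall i, e * al i <= be i.
Proof.
move=> hb; exists (\big[Num.min/1]_i (be i / (`|al i| + 1))); split.
  apply: (big_ind (fun y => 0 < y)) => //.
    by move=> a b ha hb'; rewrite lt_min ha hb'.
  by move=> i _; rewrite divr_gt0 // ltr_wpDl.
move=> i; set e := \big[Num.min/1]_i _.
have he : 0 <= e.
  apply: (big_ind (fun y => 0 <= y)) => //.
    by move=> a b ha hb'; rewrite le_min ha hb'.
  by move=> k _; rewrite divr_ge0 // ?ltW // ltr_wpDl.
have hle : e <= be i / (`|al i| + 1) by apply: bigmin_le_seq; rewrite mem_index_enum.
have hp : 0 < `|al i| + 1 by rewrite ltr_wpDl.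
apply: le_trans (_ : e * (`|al i| + 1) <= _).
  by rewrite ler_wpM2l // (le_trans (ler_norm _)) // lerDl.
by rewrite -[X in _ <= X](divfK (negbT (gt_eqF hp)) (be i)) ler_wpM2r // ltW.
Qed.

Lemma dot_row m n (p : 'rV[R]_m) (q : 'rV[R]_n) dd :
  dot (row_mx p q) dd = dot p (usubmx dd) + dot q (dsubmx dd).
Proof. by rewrite -{1}(vsubmxK dd) /dot mul_row_col mxE. Qed.
Lemma dot_delta n (i : 'I_n) (d : 'cV[R]_n) : dot (delta_mx 0 i) d = d i 0.
Proof. by rewrite /dot -rowE mxE. Qed.
Lemma dot0 n (d : 'cV[R]_n) : dot 0 d = 0.
Proof. by rewrite /dot mul0mx mxE. Qed.
Lemma dot_const1 n (d : 'cV[R]_n) : dot (const_mx 1) d = \sum_i d i 0.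
Proof. by rewrite dotE; apply: eq_bigr => i _; rewrite mxE mul1r. Qed.
Lemma dot_rowk m n (M : 'M[R]_(m, n)) k d : dot (row k M) d = (M *m d) k 0.
Proof. by rewrite /dot -row_mul mxE. Qed.

Lemma kkt_nec x u th pi : (forall k, (MU *m u) k 0 <= bU k 0) ->
  (forall u', (forall k, (MU *m u') k 0 <= bU k 0) -> phi x u' th pi <= phi x u th pi) ->
  exists SA SJ lam mu, KKT x u th pi SA SJ lam mu.
Proof.
move=> hu hopt.
set SA := [set k | (MU *m u) k 0 == bU k 0].
set SJ := [set s : sig | ee x u th pi (tag s) (tagged s) == mn x u th pi (tag s)].
pose Pp (i : ('I_kU + sig)%type) := match i with inl k => k \in SA | inr s => s \in SJ end.
pose a (i : ('I_kU + sig)%type) : 'rV[R]_(nu + K) := match i with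
  | inl k => row_mx (row k MU) 0
  | inr s => row_mx (- rr (tag s) (tagged s)) (delta_mx 0 (tag s)) end.
set g := gcol x u th pi.
pose c : 'rV[R]_(nu + K) := row_mx g^T (const_mx 1).
have Hf : forall dd, (forall i, Pp i -> dot (a i) dd <= 0) -> dot c dd <= 0.
  move=> dd Hd; set du := usubmx dd; set ds := dsubmx dd.
  have HA : forall k, k \in SA -> (MU *m du) k 0 <= 0.
    move=> k hk; have := Hd (inl k) hk; by rewrite /a dot_row dot0 addr0 dot_rowk.
  have HJ : forall s, s \in SJ -> ds (tag s) 0 <= dot (rr (tag s) (tagged s)) du.
    move=> s hs; have := Hd (inr s) hs; by rewrite /a dot_row dotNl dot_delta addrC subr_le0.
  rewrite /c dot_row dot_const1 -/du -/ds.
  set L := dot g^T du + \sum_i ds i 0.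
  rewrite leNgt; apply/negP => HL.
  set ka := ((Pm *m du)^T *m Q *m (Pm *m du)) 0 0.
  pose al (i : ('I_kU + sig + unit)%type) := match i with
    | inl (inl k) => (MU *m du) k 0
    | inl (inr s) => ds (tag s) 0 - dot (rr (tag s) (tagged s)) du
    | inr _ => `|ka| end.
  pose be (i : ('I_kU + sig + unit)%type) := match i with
    | inl (inl k) => if k \in SA then 1 else bU k 0 - (MU *m u) k 0
    | inl (inr s) => if s \in SJ then 1 else ee x u th pi (tag s) (tagged s) - mn x u th pi (tag s)
    | inr _ => L / 2 end.
  have Hbe : forall i, 0 < be i.
    case=> [[k|s]|[]] /=.
    - case: ifP => // /negbT; rewrite inE => ne; rewrite subr_gt0 lt_neqAle hu andbT.
      exact: ne.
    - case: ifP => // /negbT; rewrite inE => ne; rewrite subr_gt0 lt_neqAle mn_le andbT.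
      by rewrite eq_sym.
    - by rewrite divr_gt0.
  have [e [he He]] := @small_eps _ al be Hbe.
  set u' := u + e *: du.
  have Hu' : forall k, (MU *m u') k 0 <= bU k 0.
    move=> k; rewrite /u' mulmxDr -scalemxAr eDZ.
    have := He (inl (inl k)); rewrite /al /be; case: ifP => hk.
      move=> _; have hA := HA k hk; move: hk; rewrite inE => /eqP ->.
      by rewrite -[X in _ <= X]addr0 lerD2l mulr_ge0_le0 // ltW.
    by move=> h; rewrite -lerBrDl.
  have Hmn : forall i, mn x u th pi i + e * ds i 0 <= mn x u' th pi i.
    move=> i; apply: mn_ge => j; rewrite /u' ee_lin.
    have := He (inl (inr (Tagged _ j))); rewrite /al /be /=.
    case: ifP => hs.
      move=> _; have hJ := HJ _ hs; move: hs hJ; rewrite inE /= => /eqP -> hJ.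
      by rewrite lerD2l; apply: ler_wpM2l => //; apply: ltW.
    rewrite mulrBr => h; lra.
  have Hk : e * L <= e ^+ 2 * `|ka|.
    have := hopt u' Hu'; rewrite /phi /u' qf_lin -/g -/ka.
    have Hs : \sum_i mn x u th pi i + e * \sum_i ds i 0 <= \sum_i mn x (u + e *: du) th pi i.
      by rewrite mulr_sumr -big_split /=; apply: ler_sum => i _; apply: Hmn.
    move: Hs; rewrite /L.
    have : ka <= `|ka| by apply: ler_norm.
    have : 0 <= e ^+ 2 by apply: sqr_ge0.
    set S1 := \sum_i mn x u th pi i; set S2 := \sum_i mn x (u + e *: du) th pi i.
    set D := dot _ du; set E := \sum_i ds i 0.
    move=> h1 h2 h3 h4; rewrite mulrDr.
    have : e ^+ 2 * ka <= e ^+ 2 * `|ka| by apply: ler_wpM2l.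
    move=> h5; nra.
  have : L <= e * `|ka|.
    by rewrite -(ler_pM2l he) mulrA -expr2.
  have := He (inr tt); rewrite /al /be => h1 h2.
  have : L <= L / 2 by apply: le_trans h2 h1.
  by rewrite ler_pdivlMr // -subr_le0 mulr2n mulrDr mulr1 addrK lt_geF.
have [l [l0 lP lc]] := farkas Hf.
exists SA, SJ, (fun k => l (inl k)), (fun s => l (inr s)); split.
- move=> k; case: ifP => hk; first by split; [apply: l0 | move: hk; rewrite inE => /eqP].
  by apply: (lP (inl k)); rewrite /Pp hk.
- move=> s; case: ifP => hs.
    split; first exact: l0.
    move: hs; rewrite inE => /eqP -> j'; exact: mn_le.
  by apply: (lP (inr s)); rewrite /Pp hs.
- move=> i; have := congr1 (fun M : 'rV_(nu + K) => M 0 (rshift nu i)) lc.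
  rewrite /c row_mxEr mxE summxE big_sumType /=.
  rewrite big1; last by move=> k _; rewrite mxE row_mxEr mxE mulr0.
  rewrite add0r => ->; apply: eq_bigr => s _.
  rewrite mxE row_mxEr mxE /= eq_sym.
  by case: eqP => _; rewrite ?mulr1 ?mulr0.
- move=> l0'; have := congr1 (fun M : 'rV_(nu + K) => M 0 (lshift K l0')) lc.
  rewrite /c row_mxEl mxE summxE big_sumType /= => ->.
  have E1 : \sum_k (l (inl k) *: row_mx (row k MU) 0) 0 (lshift K l0') = \sum_k l (inl k) * MU k l0'.
    by apply: eq_bigr => k _; rewrite mxE row_mxEl mxE.
  have E2 : \sum_s (l (inr s) *: row_mx (- rr (tag s) (tagged s)) (delta_mx 0 (tag s))) 0 (lshift K l0')
       = - \sum_s l (inr s) * rr (tag s) (tagged s) 0 l0'.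
    by rewrite -sumrN; apply: eq_bigr => s _; rewrite mxE row_mxEl mxE mulrN.
  by rewrite E1 E2 subrK.
Qed.
End KKT.
Set Implicit Arguments. Unset Strict Implicit.


Section Rep.
Variable R : realType.
Variables nx nu nh npi N : nat.

Record traj := Traj { tx : nat -> 'cV[R]_nx; tu : nat -> 'cV[R]_nu;
                      tth : nat -> 'cV[R]_nh; tpi : nat -> 'cV[R]_npi }.

Record atom := Atom { ax : nat -> 'rV[R]_nx; au : nat -> 'rV[R]_nu;
  ath : nat -> 'rV[R]_nh; api : nat -> 'rV[R]_npi;
  na : nat; aw : nat -> R; az : nat -> R; ac : R }.

Definition tpart (a : atom) (v : traj) : R :=
  \sum_(t < N.+1) ((ax a t *m tx v t) 0 0 + (au a t *m tu v t) 0 0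
                 + (ath a t *m tth v t) 0 0 + (api a t *m tpi v t) 0 0).

Definition eval (a : atom) v (w : nat -> R) (z : nat -> int) : R :=
  tpart a v + \sum_(i < na a) aw a i * w i + \sum_(i < na a) az a i * (z i)%:~R + ac a.

Definition trunc n (f : nat -> R) := fun i => if (i < n)%N then f i else 0.

Lemma sum_trunc n m (f : nat -> R) (g : nat -> R) : (n <= m)%N ->
  \sum_(i < m) trunc n f i * g i = \sum_(i < n) f i * g i.
Proof.
move=> nm; rewrite -(subnKC nm) big_split_ord /=.
rewrite [X in _ + X]big1 ?addr0; last first.
  by move=> i _; rewrite /trunc /= ltnNge leq_addr mul0r.
by apply: eq_bigr => i _; rewrite /trunc /= ltn_ord.
Qed.

Definition aconst c := Atom (fun _ => 0) (fun _ => 0) (fun _ => 0) (fun _ => 0) 0 (fun _ => 0) (fun _ => 0) c.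
Definition aadd a b := Atom (fun t => ax a t + ax b t) (fun t => au a t + au b t)
  (fun t => ath a t + ath b t) (fun t => api a t + api b t) (maxn (na a) (na b))
  (fun i => trunc (na a) (aw a) i + trunc (na b) (aw b) i)
  (fun i => trunc (na a) (az a) i + trunc (na b) (az b) i) (ac a + ac b).
Definition ascale k a := Atom (fun t => k *: ax a t) (fun t => k *: au a t)
  (fun t => k *: ath a t) (fun t => k *: api a t) (na a)
  (fun i => k * aw a i) (fun i => k * az a i) (k * ac a).
Definition ashift n a := Atom (ax a) (au a) (ath a) (api a) (n + na a)
  (fun i => if (i < n)%N then 0 else aw a (i - n))
  (fun i => if (i < n)%N then 0 else az a (i - n)) (ac a).
Definition awat i0 k := Atom (fun _ => 0) (fun _ => 0) (fun _ => 0) (fun _ => 0) i0.+1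
  (fun i => if i == i0 then k else 0) (fun _ => 0) 0.
Definition azat i0 k := Atom (fun _ => 0) (fun _ => 0) (fun _ => 0) (fun _ => 0) i0.+1
  (fun _ => 0) (fun i => if i == i0 then k else 0) 0.
Definition ax_at t0 (r : 'rV[R]_nx) := Atom (fun t => if t == t0 then r else 0) (fun _ => 0)
  (fun _ => 0) (fun _ => 0) 0 (fun _ => 0) (fun _ => 0) 0.
Definition au_at t0 (r : 'rV[R]_nu) := Atom (fun _ => 0) (fun t => if t == t0 then r else 0)
  (fun _ => 0) (fun _ => 0) 0 (fun _ => 0) (fun _ => 0) 0.
Definition ath_at t0 (r : 'rV[R]_nh) := Atom (fun _ => 0) (fun _ => 0)
  (fun t => if t == t0 then r else 0) (fun _ => 0) 0 (fun _ => 0) (fun _ => 0) 0.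
Definition api_at t0 (r : 'rV[R]_npi) := Atom (fun _ => 0) (fun _ => 0)
  (fun _ => 0) (fun t => if t == t0 then r else 0) 0 (fun _ => 0) (fun _ => 0) 0.

Lemma tpart0 a v : (forall t, ax a t = 0) -> (forall t, au a t = 0) ->
  (forall t, ath a t = 0) -> (forall t, api a t = 0) -> tpart a v = 0.
Proof.
move=> h1 h2 h3 h4; rewrite /tpart big1 // => t _.
by rewrite h1 h2 h3 h4 !mul0mx !mxE !addr0.
Qed.

Lemma eval_const c v w z : eval (aconst c) v w z = c.
Proof. by rewrite /eval tpart0 // !big_ord0 !add0r. Qed.

Lemma tpart_add a b v : tpart (aadd a b) v = tpart a v + tpart b v.
Proof.
rewrite /tpart -big_split; apply: eq_bigr => t _ /=.
rewrite !mulmxDl !mxE; ring.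
Qed.

Lemma eval_add a b v w z : eval (aadd a b) v w z = eval a v w z + eval b v w z.
Proof.
rewrite /eval tpart_add /=.
under eq_bigr => i _ do rewrite mulrDl.
rewrite big_split /= (sum_trunc _ w) ?leq_maxl // (sum_trunc _ w) ?leq_maxr //.
under [X in _ + X + _]eq_bigr => i _ do rewrite mulrDl.
rewrite big_split /= (sum_trunc _ (fun i => (z i)%:~R)) ?leq_maxl //.
rewrite (sum_trunc _ (fun i => (z i)%:~R)) ?leq_maxr //.
ring.
Qed.

Lemma eval_scale k a v w z : eval (ascale k a) v w z = k * eval a v w z.
Proof.
rewrite /eval /tpart /= !mulrDr !mulr_sumr; congr (_ + _ + _ + _); apply: eq_bigr => t _.
  by rewrite -!scalemxAl !mxE; ring.
by ring.
by ring.
Qed.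

Lemma eval_shift n a v w z : eval (ashift n a) v w z =
  eval a v (fun i => w (n + i)%N) (fun i => z (n + i)%N).
Proof.
rewrite /eval /tpart /= !big_split_ord /=.
have E : forall (F G : nat -> R), \sum_(i < n) (if (i < n)%N then 0 else F i) * G i = 0.
  by move=> F G; apply: big1 => i _; rewrite ltn_ord mul0r.
rewrite (E (fun i => aw a (i - n)) w) (E (fun i => az a (i-n)) (fun i => (z i)%:~R)) !add0r.
congr (_ + _ + _ + _); apply: eq_bigr => i _;
  by rewrite ltnNge leq_addr /= addKn.
Qed.

Lemma eval_ext a v w z w' z' : (forall i, (i < na a)%N -> w i = w' i) ->
  (forall i, (i < na a)%N -> z i = z' i) -> eval a v w z = eval a v w' z'.
Proof.
move=> hw hz; rewrite /eval; congr (_ + _ + _ + _); apply: eq_bigr => i _.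
  by rewrite hw.
by rewrite hz.
Qed.

Lemma eval_wat i0 k v w z : eval (awat i0 k) v w z = k * w i0.
Proof.
rewrite /eval tpart0 //= big_ord_recr /= big1; last first.
  by move=> i _; rewrite (ltn_eqF (ltn_ord i)) mul0r.
rewrite eqxx big1 ?add0r ?addr0 //.
by move=> i _; rewrite mul0r.
Qed.

Lemma eval_zat i0 k v w z : eval (azat i0 k) v w z = k * (z i0)%:~R.
Proof.
rewrite /eval tpart0 //= (eq_bigr (fun=> 0)); last by move=> i _; rewrite mul0r.
rewrite big1_eq big_ord_recr /= big1 ?eqxx ?add0r ?addr0 //.
by move=> i _; rewrite (ltn_eqF (ltn_ord i)) mul0r.
Qed.

Lemma sum_at (F : nat -> R) t0 : (t0 <= N)%N ->
  \sum_(t < N.+1) (if (t : nat) == t0 then F t else 0) = F t0.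
Proof.
move=> ht; rewrite (bigD1 (Ordinal (ht : (t0 < N.+1)%N))) //= eqxx big1 ?addr0 //.
by move=> i /eqP ne; case: eqP => // e; case: ne; apply: val_inj.
Qed.

Lemma eval_xat t0 r v w z : (t0 <= N)%N -> eval (ax_at t0 r) v w z = (r *m tx v t0) 0 0.
Proof.
move=> ht; rewrite /eval /tpart /= !big_ord0 !addr0 -(sum_at (fun t => (r *m tx v t) 0 0) ht).
by apply: eq_bigr => t _; case: eqP; rewrite !mul0mx !mxE !addr0.
Qed.
Lemma eval_uat t0 r v w z : (t0 <= N)%N -> eval (au_at t0 r) v w z = (r *m tu v t0) 0 0.
Proof.
move=> ht; rewrite /eval /tpart /= !big_ord0 !addr0 -(sum_at (fun t => (r *m tu v t) 0 0) ht).
by apply: eq_bigr => t _; case: eqP; rewrite !mul0mx !mxE !addr0 ?add0r.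
Qed.
Lemma eval_that t0 r v w z : (t0 <= N)%N -> eval (ath_at t0 r) v w z = (r *m tth v t0) 0 0.
Proof.
move=> ht; rewrite /eval /tpart /= !big_ord0 !addr0 -(sum_at (fun t => (r *m tth v t) 0 0) ht).
by apply: eq_bigr => t _; case: eqP; rewrite !mul0mx !mxE !addr0 ?add0r.
Qed.
Lemma eval_piat t0 r v w z : (t0 <= N)%N -> eval (api_at t0 r) v w z = (r *m tpi v t0) 0 0.
Proof.
move=> ht; rewrite /eval /tpart /= !big_ord0 !addr0 -(sum_at (fun t => (r *m tpi v t) 0 0) ht).
by apply: eq_bigr => t _; case: eqP; rewrite !mul0mx !mxE ?addr0 ?add0r.
Qed.


Definition Aff (F : traj -> (nat -> R) -> (nat -> int) -> R) :=
  exists a, forall v w z, F v w z = eval a v w z.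

Lemma aff_const c : Aff (fun _ _ _ => c).
Proof. by exists (aconst c) => v w z; rewrite eval_const. Qed.
Lemma aff_add F G : Aff F -> Aff G -> Aff (fun v w z => F v w z + G v w z).
Proof. by move=> [a Ha] [b Hb]; exists (aadd a b) => v w z; rewrite eval_add Ha Hb. Qed.
Lemma aff_scale k F : Aff F -> Aff (fun v w z => k * F v w z).
Proof. by move=> [a Ha]; exists (ascale k a) => v w z; rewrite eval_scale Ha. Qed.
Lemma aff_opp F : Aff F -> Aff (fun v w z => - F v w z).
Proof.
move=> h; have [a Ha] := aff_scale (-1) h; exists a => v w z.
by rewrite -Ha mulN1r.
Qed.
Lemma aff_sub F G : Aff F -> Aff G -> Aff (fun v w z => F v w z - G v w z).
Proof. by move=> h1 h2; apply: aff_add => //; apply: aff_opp. Qed.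
Lemma aff_ext F G : Aff F -> (forall v w z, F v w z = G v w z) -> Aff G.
Proof. by move=> [a Ha] e; exists a => v w z; rewrite -e. Qed.
Lemma aff_sum (I : Type) (r : seq I) (F : I -> traj -> (nat -> R) -> (nat -> int) -> R) :
  (forall i, Aff (F i)) -> Aff (fun v w z => \sum_(i <- r) F i v w z).
Proof.
move=> h; elim: r => [|a r IH].
  by apply: (aff_ext (aff_const 0)) => v w z; rewrite big_nil.
apply: (aff_ext (aff_add (h a) IH)) => v w z; by rewrite big_cons.
Qed.
Lemma aff_w i : Aff (fun _ w _ => w i).
Proof. by exists (awat i 1) => v w z; rewrite eval_wat mul1r. Qed.
Lemma aff_z i : Aff (fun _ _ z => (z i)%:~R).
Proof. by exists (azat i 1) => v w z; rewrite eval_zat mul1r. Qed.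

Definition AffV n (V : traj -> 'cV[R]_n) := forall i, Aff (fun v _ _ => V v i 0).

Lemma deltaE n (x : 'cV[R]_n) j : ((delta_mx 0 j : 'rV_n) *m x) 0 0 = x j 0.
Proof. by rewrite -rowE mxE. Qed.

Lemma affv_x t : (t <= N)%N -> AffV (fun v => tx v t).
Proof. by move=> ht j; exists (ax_at t (delta_mx 0 j)) => v w z; rewrite eval_xat // deltaE. Qed.
Lemma affv_u t : (t <= N)%N -> AffV (fun v => tu v t).
Proof. by move=> ht j; exists (au_at t (delta_mx 0 j)) => v w z; rewrite eval_uat // deltaE. Qed.
Lemma affv_th t : (t <= N)%N -> AffV (fun v => tth v t).
Proof. by move=> ht j; exists (ath_at t (delta_mx 0 j)) => v w z; rewrite eval_that // deltaE. Qed.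
Lemma affv_pi t : (t <= N)%N -> AffV (fun v => tpi v t).
Proof. by move=> ht j; exists (api_at t (delta_mx 0 j)) => v w z; rewrite eval_piat // deltaE. Qed.

Lemma affv_mul m n (M : 'M[R]_(m, n)) V : AffV V -> AffV (fun v => M *m V v).
Proof.
move=> h i.
have hs := @aff_sum _ (index_enum 'I_n)
   (fun j v (w : nat -> R) (z : nat -> int) => M i j * V v j 0)
   (fun j => aff_scale (M i j) (h j)).
by apply: (aff_ext hs) => v w z; rewrite mxE.
Qed.
Lemma affv_add n (V1 V2 : traj -> 'cV[R]_n) : AffV V1 -> AffV V2 -> AffV (fun v => V1 v + V2 v).
Proof.
by move=> h1 h2 i; apply: (aff_ext (aff_add (h1 i) (h2 i))) => v w z; rewrite mxE.
Qed.
Lemma affv_opp n (V1 : traj -> 'cV[R]_n) : AffV V1 -> AffV (fun v => - V1 v).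
Proof.
by move=> h1 i; apply: (aff_ext (aff_opp (h1 i))) => v w z; rewrite mxE.
Qed.
Lemma affv_const n (c : 'cV[R]_n) : AffV (fun _ => c).
Proof. by move=> i; apply: aff_const. Qed.
Lemma affv_col m n (V1 : traj -> 'cV[R]_m) (V2 : traj -> 'cV[R]_n) :
  AffV V1 -> AffV V2 -> AffV (fun v => col_mx (V1 v) (V2 v)).
Proof.
move=> h1 h2 i; case: (split_ordP i) => j ->.
  by apply: (aff_ext (h1 j)) => v w z; rewrite col_mxEu.
by apply: (aff_ext (h2 j)) => v w z; rewrite col_mxEd.
Qed.
Lemma affv_ext n (V1 V2 : traj -> 'cV[R]_n) : AffV V1 -> (forall v, V1 v = V2 v) -> AffV V2.
Proof. by move=> h e i; apply: (aff_ext (h i)) => v w z; rewrite e. Qed.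

Fixpoint holds (ds : seq atom) v w z : Prop :=
  if ds is a :: ds' then eval a v w z <= 0 /\ holds ds' v w z else True.

Lemma holdsP ds v w z : holds ds v w z <-> (forall a, List.In a ds -> eval a v w z <= 0).
Proof.
elim: ds => [|a ds IH] /=; first by split.
split.
  by move=> [h1 /IH h2] b [<-|/h2].
by move=> h; split; [apply: h; left | apply/IH => b hb; apply: h; right].
Qed.

Definition CF (P : traj -> (nat -> R) -> (nat -> int) -> Prop) :=
  exists ds, forall v w z, P v w z <-> holds ds v w z.

Lemma cf_true : CF (fun _ _ _ => True).
Proof. by exists [::]. Qed.
Lemma cf_le F : Aff F -> CF (fun v w z => F v w z <= 0).
Proof. by move=> [a Ha]; exists [:: a] => v w z /=; rewrite Ha; split => [->|[]]. Qed.
Lemma cf_and P Q : CF P -> CF Q -> CF (fun v w z => P v w z /\ Q v w z).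
Proof.
move=> [d1 h1] [d2 h2]; exists (d1 ++ d2) => v w z.
rewrite h1 h2 !holdsP; split.
  by move=> [p q] a /List.in_app_iff [/p|/q].
by move=> h; split => a ha; apply: h; apply/List.in_app_iff; [left|right].
Qed.
Lemma cf_ext P Q : CF P -> (forall v w z, P v w z <-> Q v w z) -> CF Q.
Proof. by move=> [d h] e; exists d => v w z; rewrite -e. Qed.
Lemma cf_leq F G : Aff F -> Aff G -> CF (fun v w z => F v w z <= G v w z).
Proof.
move=> h1 h2; apply: (cf_ext (cf_le (aff_sub h1 h2))) => v w z.
by rewrite subr_le0.
Qed.
Lemma cf_eq F G : Aff F -> Aff G -> CF (fun v w z => F v w z = G v w z).
Proof.
move=> h1 h2; apply: (cf_ext (cf_and (cf_leq h1 h2) (cf_leq h2 h1))) => v w z.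
by split => [[a b]|->//]; apply/eqP; rewrite eq_le a b.
Qed.
Lemma cf_all (T : eqType) (s : seq T) P : (forall i, CF (P i)) ->
  CF (fun v w z => forall i, i \in s -> P i v w z).
Proof.
move=> h; elim: s => [|a s IH].
  by apply: (cf_ext cf_true).
apply: (cf_ext (cf_and (h a) IH)) => v w z; split.
  by move=> [p q] i; rewrite inE => /orP [/eqP->//|]; apply: q.
by move=> H; split; [apply: H; rewrite mem_head | move=> i hi; apply: H; rewrite inE hi orbT].
Qed.
Lemma cf_all_ord n P : (forall i : 'I_n, CF (P i)) -> CF (fun v w z => forall i, P i v w z).
Proof.
move=> h; apply: (cf_ext (cf_all (enum 'I_n) h)) => v w z.
by split => H i; [apply: H; rewrite mem_enum | move=> _; apply: H].
Qed.
Lemma cf_imp (b : bool) P : CF P -> CF (fun v w z => b -> P v w z).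
Proof.
by case: b => h; [apply: (cf_ext h) | apply: (cf_ext cf_true)] => v w z; split => //; apply.
Qed.
Lemma cf_le_vec n (V1 V2 : traj -> 'cV[R]_n) : AffV V1 -> AffV V2 ->
  CF (fun v _ _ => forall i, V1 v i 0 <= V2 v i 0).
Proof. by move=> h1 h2; apply: cf_all_ord => i; apply: cf_leq. Qed.
Lemma cf_eq_vec n (V1 V2 : traj -> 'cV[R]_n) : AffV V1 -> AffV V2 ->
  CF (fun v _ _ => V1 v = V2 v).
Proof.
move=> h1 h2; apply: (cf_ext (cf_all_ord (fun i => cf_eq (h1 i) (h2 i)))) => v w z.
split => [H|->//]; apply/matrixP => i j; by rewrite (ord1 j).
Qed.

Definition Rep (S : traj -> Prop) := exists ds, forall v, S v <-> exists w z, holds ds v w z.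

Lemma rep_cf P : CF P -> Rep (fun v => exists w z, P v w z).
Proof.
move=> [d h]; exists d => v; split => [[w [z /h p]]|[w [z p]]]; exists w, z => //.
by apply/h.
Qed.
Lemma rep_cf0 (P : traj -> Prop) : CF (fun v _ _ => P v) -> Rep P.
Proof.
move=> h; have [d hd] := rep_cf h; exists d => v; rewrite -hd.
by split => [p|[w [z p]]] //; exists (fun=> 0), (fun=> 0).
Qed.
Lemma rep_ext S T : Rep S -> (forall v, S v <-> T v) -> Rep T.
Proof. by move=> [d h] e; exists d => v; rewrite -e. Qed.

Definition bnd (ds : seq atom) := foldr (fun a n => maxn (na a) n) 0%N ds.
Lemma bnd_in a ds : List.In a ds -> (na a <= bnd ds)%N.
Proof.
elim: ds => [|b ds IH] //= [->|/IH h]; first exact: leq_maxl.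
exact: leq_trans h (leq_maxr _ _).
Qed.

Lemma holds_shift n ds v w z :
  holds (map (ashift n) ds) v w z <-> holds ds v (fun i => w (n + i)%N) (fun i => z (n + i)%N).
Proof. by elim: ds => [|a ds IH] //=; rewrite eval_shift IH. Qed.

Lemma rep_and S T : Rep S -> Rep T -> Rep (fun v => S v /\ T v).
Proof.
move=> [d1 h1] [d2 h2]; set n := bnd d1.
exists (d1 ++ map (ashift n) d2) => v; rewrite h1 h2; split.
  move=> [[w1 [z1 H1]] [w2 [z2 H2]]].
  exists (fun i => if (i < n)%N then w1 i else w2 (i - n)%N).
  exists (fun i => if (i < n)%N then z1 i else z2 (i - n)%N).
  apply/holdsP => a /List.in_app_iff [ha|ha].
    move/holdsP: H1 => /(_ a ha); rewrite (@eval_ext a v _ _ w1 z1) // => i hi;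
      by rewrite (leq_trans hi (bnd_in ha)).
  have := (holds_shift n d2 v
      (fun i => if (i < n)%N then w1 i else w2 (i - n)%N)
      (fun i => if (i < n)%N then z1 i else z2 (i - n)%N)).2.
  move/(_ _)/holdsP; apply => //.
  have -> : (fun i => if (n + i < n)%N then w1 (n + i)%N else w2 (n + i - n)%N) = w2.
    by apply: functional_extensionality => i; rewrite ltnNge leq_addr addKn.
  have -> : (fun i => if (n + i < n)%N then z1 (n + i)%N else z2 (n + i - n)%N) = z2.
    by apply: functional_extensionality => i; rewrite ltnNge leq_addr addKn.
  done.
move=> [w [z /holdsP H]]; split.
  by exists w, z; apply/holdsP => a ha; apply: H; apply/List.in_app_iff; left.
exists (fun i => w (n + i)%N), (fun i => z (n + i)%N); apply/holds_shift/holdsP => a ha.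
by apply: H; apply/List.in_app_iff; right.
Qed.

Lemma rep_true : Rep (fun _ => True).
Proof. by apply: rep_cf0; apply: (cf_ext cf_true). Qed.
Lemma rep_false : Rep (fun _ => False).
Proof.
apply: rep_cf0; apply: (cf_ext (cf_le (aff_const 1))) => v w z.
by split => //; rewrite ler10.
Qed.
Lemma rep_all (T : eqType) (s : seq T) S : (forall i, Rep (S i)) ->
  Rep (fun v => forall i, i \in s -> S i v).
Proof.
move=> h; elim: s => [|a s IH]; first by apply: (rep_ext rep_true).
apply: (rep_ext (rep_and (h a) IH)) => v; split.
  by move=> [p q] i; rewrite inE => /orP [/eqP->//|]; apply: q.
by move=> H; split; [apply: H; rewrite mem_head | move=> i hi; apply: H; rewrite inE hi orbT].
Qed.

Variable c : R.
Definition box v := forall t, (t <= N)%N ->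
  [/\ forall j, `|tx v t j 0| <= c, forall j, `|tu v t j 0| <= c,
      forall j, `|tth v t j 0| <= c & forall j, `|tpi v t j 0| <= c].

Lemma dot_bound n (r : 'rV[R]_n) (x : 'cV[R]_n) : (forall j, `|x j 0| <= c) ->
  (r *m x) 0 0 <= \sum_j `|r 0 j| * c.
Proof.
move=> h; rewrite mxE; apply: ler_sum => j _.
apply: le_trans (ler_norm _) _; rewrite normrM.
by apply: ler_wpM2l => //.
Qed.

Lemma atom_bound a : exists M, forall v, box v -> eval a v (fun=> 0) (fun=> 0) <= M.
Proof.
exists (\sum_(t < N.+1) (\sum_j `|ax a t 0 j| * c + \sum_j `|au a t 0 j| * c
          + \sum_j `|ath a t 0 j| * c + \sum_j `|api a t 0 j| * c) + ac a).
move=> v hb; rewrite /eval.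
rewrite big1; last by move=> i _; rewrite mulr0.
rewrite big1; last by move=> i _; rewrite mulr0.
rewrite !addr0 lerD2r /tpart; apply: ler_sum => t _.
have [h1 h2 h3 h4] := hb t (ltn_ord t).
by rewrite !lerD ?dot_bound.
Qed.

Lemma atoms_bound ds : exists M, forall a v, List.In a ds -> box v ->
  eval a v (fun=> 0) (fun=> 0) <= M.
Proof.
elim: ds => [|a ds [M IH]]; first by exists 0.
have [Ma Ha] := atom_bound a.
exists (Num.max Ma M) => b v /= [<-|hb] hv.
  by rewrite le_max Ha.
by rewrite le_max IH ?orbT.
Qed.

Lemma int01 (d : int) : (0 : R) <= d%:~R -> (d%:~R : R) <= 1 -> d = 0 \/ d = 1.
Proof. rewrite ler0z lerz1 => h0 h1; lia. Qed.

Lemma cf_abs F : Aff F -> CF (fun v w z => `|F v w z| <= c).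
Proof.
move=> h; apply: (cf_ext (cf_and (cf_leq (aff_const (-c)) h) (cf_leq h (aff_const c)))).
move=> v w z; rewrite ler_norml; split => [[a b]|/andP //]; by rewrite a b.
Qed.

Lemma rep_box : Rep box.
Proof.
apply: rep_cf0.
have H : forall t, CF (fun v (_ : nat -> R) (_ : nat -> int) => (t <= N)%N ->
  [/\ forall j, `|tx v t j 0| <= c, forall j, `|tu v t j 0| <= c,
      forall j, `|tth v t j 0| <= c & forall j, `|tpi v t j 0| <= c]).
  move=> t; case ht: (t <= N)%N; last by apply: (cf_ext cf_true) => v w z; split.
  apply: (cf_ext (cf_and (cf_and (cf_all_ord (fun j => cf_abs (affv_x ht j)))
      (cf_all_ord (fun j => cf_abs (affv_u ht j))))
      (cf_and (cf_all_ord (fun j => cf_abs (affv_th ht j)))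
      (cf_all_ord (fun j => cf_abs (affv_pi ht j)))))) => v w z.
  by split => [[[a b] [d e]] _ //| /(_ erefl) [a b d e]].
apply: (cf_ext (cf_all (iota 0 N.+1) H)) => v w z; split => h t ht; apply: h => //.
by rewrite mem_iota.
Qed.

Lemma rep_and_cond B S ds : Rep B -> (forall v, B v -> (S v <-> exists w z, holds ds v w z)) ->
  Rep (fun v => B v /\ S v).
Proof.
move=> hB h; apply: (rep_ext (rep_and hB (rep_cf (P := holds ds) (ex_intro _ ds (fun _ _ _ => iff_refl _))))).
move=> v; split => [[b s]|[b s]]; split => //; by apply/(h v b).
Qed.

Lemma rep_or S1 S2 : Rep S1 -> Rep S2 -> Rep (fun v => box v /\ (S1 v \/ S2 v)).
Proof.
move=> [d1 h1] [d2 h2].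
have [M HM] := atoms_bound (d1 ++ d2).
set n1 := bnd d1; set n2 := bnd d2; set id := (n1 + n2)%N.
set ds := map (fun a => aadd a (aadd (azat id M) (aconst (-M)))) d1 ++
          map (fun a => aadd (ashift n1 a) (azat id (-M))) d2 ++
          [:: azat id (-1); aadd (azat id 1) (aconst (-1))].
apply: (rep_and_cond (ds := ds) rep_box) => v hv; split.
  case=> [/h1 [w1 [z1 /holdsP H1]]|/h2 [w2 [z2 /holdsP H2]]].
    exists (fun i => if (i < n1)%N then w1 i else 0).
    exists (fun i => if (i < n1)%N then z1 i else if i == id then 1 else 0).
    apply/holdsP => a /List.in_app_iff [/List.in_map_iff [b [<- hb]]|
       /List.in_app_iff [/List.in_map_iff [b [<- hb]]|hh]].
    - rewrite !eval_add eval_zat eval_const /id ltnNge leq_addr eqxx /= mulr1.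
      rewrite (@eval_ext b v _ _ w1 z1); first by rewrite addrA addrK; apply: H1.
        by move=> i hi; rewrite (leq_trans hi (bnd_in hb)).
      by move=> i hi; rewrite (leq_trans hi (bnd_in hb)).
    - rewrite !eval_add eval_shift eval_zat /id ltnNge leq_addr eqxx /= mulr1.
      rewrite (@eval_ext b v _ _ (fun=> 0) (fun=> 0)).
        rewrite subr_le0; apply: HM => //; apply/List.in_app_iff; by right.
        by move=> i hi; rewrite ltnNge leq_addr.
      move=> i hi; rewrite ltnNge leq_addr /= eqn_add2l.
      by rewrite ltn_eqF // (leq_trans hi (bnd_in hb)).
    - case: hh => [<-|[<-|[]]]; rewrite ?eval_add eval_zat ?eval_const /id ltnNge leq_addr eqxx /=.
        by rewrite mulr1 lerN10.
      by rewrite mulr1 subrr.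
  exists (fun i => if (i < n1)%N then 0 else w2 (i - n1)%N).
  exists (fun i => if (i < n1)%N then 0 else if i == id then 0 else z2 (i - n1)%N).
  apply/holdsP => a /List.in_app_iff [/List.in_map_iff [b [<- hb]]|
     /List.in_app_iff [/List.in_map_iff [b [<- hb]]|hh]].
  - rewrite !eval_add eval_zat eval_const /id ltnNge leq_addr eqxx /= mulr0 add0r.
    rewrite (@eval_ext b v _ _ (fun=> 0) (fun=> 0)).
      rewrite subr_le0; apply: HM => //; apply/List.in_app_iff; by left.
      by move=> i hi; rewrite (leq_trans hi (bnd_in hb)).
    by move=> i hi; rewrite (leq_trans hi (bnd_in hb)).
  - rewrite !eval_add eval_shift eval_zat /id ltnNge leq_addr eqxx /= mulr0 addr0.
    rewrite (@eval_ext b v _ _ w2 z2); first by apply: H2.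
      by move=> i hi; rewrite ltnNge leq_addr /= addKn.
    move=> i hi; rewrite ltnNge leq_addr /= eqn_add2l addKn.
    by rewrite ltn_eqF // (leq_trans hi (bnd_in hb)).
  - case: hh => [<-|[<-|[]]]; rewrite ?eval_add eval_zat ?eval_const /id ltnNge leq_addr eqxx /=.
      by rewrite mulr0.
    by rewrite mulr0 add0r lerN10.
move=> [w [z /holdsP H]].
have Hd0 : (0 : R) <= (z id)%:~R.
  have := H (azat id (-1)); rewrite eval_zat mulN1r oppr_le0; apply.
  by apply/List.in_app_iff; right; apply/List.in_app_iff; right; left.
have Hd1 : ((z id)%:~R : R) <= 1.
  have := H (aadd (azat id 1) (aconst (-1))); rewrite eval_add eval_zat eval_const mul1r subr_le0; apply.
  by apply/List.in_app_iff; right; apply/List.in_app_iff; right; right; left.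
case: (int01 Hd0 Hd1) => hz.
  right; apply/h2; exists (fun i => w (n1 + i)%N), (fun i => z (n1 + i)%N).
  apply/holdsP => b hb.
  have := H (aadd (ashift n1 b) (azat id (-M))).
  rewrite eval_add eval_shift eval_zat hz mulr0 addr0; apply.
  by apply/List.in_app_iff; right; apply/List.in_app_iff; left; apply/List.in_map_iff; exists b.
left; apply/h1; exists w, z; apply/holdsP => b hb.
have := H (aadd b (aadd (azat id M) (aconst (-M)))).
rewrite !eval_add eval_zat eval_const hz mulr1 addrA addrK; apply.
by apply/List.in_app_iff; left; apply/List.in_map_iff; exists b.
Qed.

Lemma rep_exists (T : eqType) (s : seq T) S : (forall i, Rep (S i)) ->
  Rep (fun v => box v /\ exists i, i \in s /\ S i v).
Proof.
move=> h; elim: s => [|a s IH].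
  by apply: (rep_ext (rep_and rep_box rep_false)) => v; split => [[]//|[_ [i []]]].
apply: (rep_ext (rep_or (h a) IH)) => v; split.
  move=> [hb [ha|[_ [i [hi hs]]]]]; split => //.
    by exists a; rewrite mem_head.
  by exists i; rewrite inE hi orbT.
move=> [hb [i [hi hs]]]; split => //; move: hi; rewrite inE => /orP [/eqP <-|hi].
  by left.
by right; split => //; exists i.
Qed.

Lemma holds_nth ds v w z : holds ds v w z <->
  (forall r, (r < size ds)%N -> eval (nth (aconst 0) ds r) v w z <= 0).
Proof.
elim: ds => [|a ds IH] /=; first by split.
rewrite IH; split.
  by move=> [h1 h2] [|r] //= hr; apply: h2.
by move=> h; split; [apply: (h 0%N) | move=> r hr; apply: (h r.+1)].
Qed.

Definition vfun n (wv : 'cV[R]_n) : nat -> R :=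
  fun i => if @insub _ (fun i => (i < n)%N) 'I_n i is Some j then wv j 0 else 0.
Definition vfunz n (wv : 'cV[int]_n) : nat -> int :=
  fun i => if @insub _ (fun i => (i < n)%N) 'I_n i is Some j then wv j 0 else 0.
Lemma vfunE n (wv : 'cV[R]_n) (j : 'I_n) : vfun wv j = wv j 0.
Proof. by rewrite /vfun valK. Qed.
Lemma vfunzE n (wv : 'cV[int]_n) (j : 'I_n) : vfunz wv j = wv j 0.
Proof. by rewrite /vfunz valK. Qed.

Lemma rep_milp S : Rep S -> exists k mw mz (Ax : nat -> 'M[R]_(k, nx)) (Au : nat -> 'M[R]_(k, nu))
         (Ath : nat -> 'M[R]_(k, nh)) (Api : nat -> 'M[R]_(k, npi))
         (Bw : 'M[R]_(k, mw)) (Bz : 'M[R]_(k, mz)) (b : 'cV[R]_k),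
    forall v, S v <->
      exists (w : 'cV[R]_mw) (z : 'cV[int]_mz),
        mxle (\sum_(t < N.+1) (Ax t *m tx v t + Au t *m tu v t + Ath t *m tth v t + Api t *m tpi v t)
              + Bw *m w + Bz *m intvec R z) b.
Proof.
move=> [ds h]; set k := size ds; set n := bnd ds.
pose at_ (r : 'I_k) := nth (aconst 0) ds r.
exists k, n, n, (fun t => \matrix_(r, j) ax (at_ r) t 0 j), (fun t => \matrix_(r, j) au (at_ r) t 0 j),
  (fun t => \matrix_(r, j) ath (at_ r) t 0 j), (fun t => \matrix_(r, j) api (at_ r) t 0 j),
  (\matrix_(r, i) (trunc (na (at_ r)) (aw (at_ r)) i)),
  (\matrix_(r, i) (trunc (na (at_ r)) (az (at_ r)) i)), (\col_r (- ac (at_ r))).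
have Hin : forall r : 'I_k, List.In (at_ r) ds.
  move=> r; rewrite /at_; have : (r < size ds)%N by [].
  elim: ds {h k n at_ r} (val r) => [|a ds IH] [|i] //= hi; [by left | right; exact: IH].
have key : forall v (wv : 'cV[R]_n) (zv : 'cV[int]_n),
  mxle (\sum_(t < N.+1) ((\matrix_(r, j) ax (at_ r) t 0 j) *m tx v t + (\matrix_(r, j) au (at_ r) t 0 j) *m tu v t
      + (\matrix_(r, j) ath (at_ r) t 0 j) *m tth v t + (\matrix_(r, j) api (at_ r) t 0 j) *m tpi v t)
      + (\matrix_(r, i) (trunc (na (at_ r)) (aw (at_ r)) i)) *m wv
      + (\matrix_(r, i) (trunc (na (at_ r)) (az (at_ r)) i)) *m intvec R zv) (\col_r (- ac (at_ r)))
  <-> holds ds v (vfun wv) (vfunz zv).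
  move=> v wv zv; set Lm := (X in mxle X _); set bm := (X in mxle _ X).
  have E : forall r, eval (at_ r) v (vfun wv) (vfunz zv) = Lm r 0 - bm r 0.
    move=> r; rewrite /Lm /bm !mxE summxE opprK /eval /tpart.
    congr (_ + _ + _ + _).
    - apply: eq_bigr => t _; rewrite !mxE; congr (_ + _ + _ + _); apply: eq_bigr => i _; by rewrite mxE.
    - rewrite -(sum_trunc _ (vfun wv) (bnd_in (Hin r))).
      by apply: eq_bigr => i _; rewrite mxE vfunE.
    - rewrite -(sum_trunc _ (fun i => (vfunz zv i)%:~R) (bnd_in (Hin r))).
      by apply: eq_bigr => i _; rewrite !mxE vfunzE.
  rewrite holds_nth; split.
    move=> H r hr; have := E (Ordinal hr); rewrite /at_ /= => ->; rewrite subr_le0; exact: H.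
  move=> H r j; rewrite (ord1 j) -subr_le0 -E; exact: H r (ltn_ord r).
move=> v; rewrite h; split.
  move=> [w [z H]]; exists (\col_(i < n) w i), (\col_(i < n) z i); apply/key.
  apply/holdsP => a ha; move/holdsP: H => /(_ a ha); rewrite (@eval_ext a v _ _ (vfun (\col_(i < n) w i)) (vfunz (\col_(i < n) z i))) //.
    move=> i hi; have hn : (i < n)%N := leq_trans hi (bnd_in ha).
    by rewrite -[i]/(val (Ordinal hn)) vfunE mxE.
  move=> i hi; have hn : (i < n)%N := leq_trans hi (bnd_in ha).
  by rewrite -[i]/(val (Ordinal hn)) vfunzE mxE.
by move=> [wv [zv /key H]]; exists (vfun wv), (vfunz zv).
Qed.
End Rep.

Unset Implicit Arguments. Set Strict Implicit.

Section Main.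
Set Implicit Arguments. Unset Strict Implicit.
Variable R : realType.
Variables nx nu nh npi N : nat.
Notation tr := (traj R nx nu nh npi).

Lemma axv t : (t <= N)%N -> AffV N (fun v : tr => tx v t).
Proof. exact: affv_x. Qed.
Lemma auv t : (t <= N)%N -> AffV N (fun v : tr => tu v t).
Proof. exact: affv_u. Qed.
Lemma athv t : (t <= N)%N -> AffV N (fun v : tr => tth v t).
Proof. exact: affv_th. Qed.
Lemma apiv t : (t <= N)%N -> AffV N (fun v : tr => tpi v t).
Proof. exact: affv_pi. Qed.
Arguments axv [t]. Arguments auv [t]. Arguments athv [t]. Arguments apiv [t].
Lemma aaw i : Aff N (fun (_ : tr) w (_ : nat -> int) => w i).
Proof. exact: aff_w. Qed.
Lemma aaz i : Aff N (fun (_ : tr) (_ : nat -> R) (z : nat -> int) => (z i)%:~R : R).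
Proof. exact: aff_z. Qed.
Lemma acst (c0 : R) : Aff N (fun (_ : tr) (_ : nat -> R) (_ : nat -> int) => c0).
Proof. exact: aff_const. Qed.
Lemma aff_if (b : bool) (F1 F2 : tr -> (nat -> R) -> (nat -> int) -> R) : Aff N F1 -> Aff N F2 -> Aff N (fun v w z => if b then F1 v w z else F2 v w z).
Proof. by case: b. Qed.
Lemma cf_if (b : bool) (P1 P2 : tr -> (nat -> R) -> (nat -> int) -> Prop) : CF N P1 -> CF N P2 -> CF N (fun v w z => if b then P1 v w z else P2 v w z).
Proof. by case: b. Qed.
Lemma affv_coord n (V : tr -> 'cV[R]_n) (r : 'rV[R]_n) c0 : AffV N V ->
  Aff N (fun v _ _ => (r *m V v) 0 0 + c0).
Proof.
move=> h; apply: aff_add; last exact: acst.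
exact: (affv_mul r h 0).
Qed.

Lemma rep_poly m k (M : 'M[R]_(k, m)) b (V : tr -> 'cV[R]_m) (S : 'cV[R]_m -> Prop) :
  (forall y, S y <-> mxle (M *m y) b) -> AffV N V -> Rep N (fun v => S (V v)).
Proof.
move=> hS hV; apply: rep_cf0; apply: (cf_ext (cf_le_vec (affv_mul M hV) (affv_const _ _ _ _ _ b))).
move=> v w z; rewrite hS; split => h i; first by move=> j; rewrite (ord1 j); apply: h.
exact: h.
Qed.

Lemma rep_milpS m k mw mz (M : 'M[R]_(k, m)) (Bw : 'M[R]_(k, mw)) (Bz : 'M[R]_(k, mz)) b
  (V : tr -> 'cV[R]_m) (S : 'cV[R]_m -> Prop) :
  (forall y, S y <-> exists w z, mxle (M *m y + Bw *m w + Bz *m intvec R z) b) -> AffV N V ->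
  Rep N (fun v => S (V v)).
Proof.
move=> hS hV.
have H : CF N (fun v w z => forall r : 'I_k, (M *m V v) r 0 + \sum_(j < mw) Bw r j * w j
            + \sum_(j < mz) Bz r j * (z j)%:~R <= b r 0).
  apply: cf_all_ord => r; apply: cf_leq; last exact: acst.
  apply: aff_add; first apply: aff_add; first exact: (affv_mul M hV r).
    by apply: aff_sum => j; apply: (aff_ext (aff_scale (Bw r j) (aaw j))).
  by apply: aff_sum => j; apply: (aff_ext (aff_scale (Bz r j) (aaz j))).
apply: (rep_ext (rep_cf H)) => v; rewrite hS; split.
  move=> [w [z h]]; exists (\col_(j < mw) w j), (\col_(j < mz) z j) => r j.
  rewrite (ord1 j) !mxE; move: (h r); congr (_ + _ + _ <= _).
  - by rewrite mxE.
  - by apply: eq_bigr => i _; rewrite !mxE.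
  - by apply: eq_bigr => i _; rewrite !mxE.
move=> [wv [zv h]]; exists (vfun wv), (vfunz zv) => r.
move: (h r 0); rewrite !mxE; congr (_ + _ + _ <= _).
- by apply: eq_bigr => i _; rewrite vfunE.
- by apply: eq_bigr => i _; rewrite vfunzE mxE.
Qed.


Lemma cf_all_fin (T : finType) (P : T -> tr -> (nat -> R) -> (nat -> int) -> Prop) :
  (forall i, CF N (P i)) -> CF N (fun v w z => forall i, P i v w z).
Proof.
move=> h; apply: (cf_ext (cf_all (enum T) h)) => v w z.
by split => H i; [apply: H; rewrite mem_enum | move=> _; apply: H].
Qed.

Variables (Q : 'M[R]_(nx + nu)) (H : 'M[R]_(nh + npi, nx + nu)) (K : nat) (Js : 'I_K -> nat)
 (F : forall i : 'I_K, 'I_(Js i).+1 -> 'rV[R]_((nx + nu) + (nh + npi)))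
 (zeta : forall i : 'I_K, 'I_(Js i).+1 -> R)
 (A : 'M[R]_nx) (B : 'M[R]_(nx, nu)) (kk : 'cV[R]_nx) (kU : nat) (MU : 'M[R]_(kU, nu)) (bU : 'cV[R]_kU).

Arguments F : clear implicits.
Arguments zeta : clear implicits.
Notation sig := {i : 'I_K & 'I_(Js i).+1}.
Definition idx (s : sig) : nat := (kU + enum_rank s)%N.
Notation KKT' := (@KKT R nx nu nh npi Q H K Js F zeta A B kk kU MU bU).
Notation ee' := (@ee R nx nu nh npi K Js F zeta A B kk).
Notation gcol' := (@gcol R nx nu nh npi Q H A B kk).
Notation rr' := (@rr R nx nu nh npi K Js F B).
Notation wvec' := (@wvec R nx nu A B kk).

Lemma affv_wvec t : (t <= N)%N -> AffV N (fun v : tr => wvec' (tx v t) (tu v t)).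
Proof.
move=> ht.
have h1 := affv_add (affv_add (affv_mul A (axv ht)) (affv_mul B (auv ht))) (affv_const nx nu nh npi N kk).
have h2 := affv_col h1 (auv ht).
apply: (affv_ext h2) => v.
by rewrite /wvec.
Qed.
Lemma affv_p t : (t <= N)%N -> AffV N (fun v : tr => col_mx (tth v t) (tpi v t)).
Proof. by move=> ht; apply: affv_col; [apply: athv | apply: apiv]. Qed.
Lemma aff_ee t i j : (t <= N)%N ->
  Aff N (fun (v : tr) (_ : nat -> R) (_ : nat -> int) => ee' (tx v t) (tu v t) (tth v t) (tpi v t) i j).
Proof.
move=> ht; have h := affv_coord (F i j) (zeta i j) (affv_col (affv_wvec ht) (affv_p ht)).
apply: (aff_ext h).
by move=> v w z; rewrite /ee.
Qed.
Lemma affv_gcol t : (t <= N)%N -> AffV N (fun v : tr => gcol' (tx v t) (tu v t) (tth v t) (tpi v t)).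
Proof.
move=> ht; apply: (affv_ext (affv_add (affv_opp (affv_mul _ (affv_wvec ht))) (affv_mul _ (affv_p ht)))).
by move=> v; rewrite /gcol.
Qed.

Arguments affv_wvec [t]. Arguments affv_p [t]. Arguments aff_ee [t]. Arguments affv_gcol [t].
Lemma cf_kkt t SA SJ : (t <= N)%N -> CF N (fun (v : tr) (w : nat -> R) (z : nat -> int) =>
  KKT' (tx v t) (tu v t) (tth v t) (tpi v t) SA SJ (fun k => w k) (fun s => w (idx s))).
Proof.
move=> ht.
have C1 := cf_all_ord (fun k : 'I_kU => cf_if (k \in SA)
    (cf_and (cf_leq (acst 0) (aaw k)) (cf_eq (affv_mul MU (auv ht) k) (acst (bU k 0))))
    (cf_eq (aaw k) (acst 0))).
have C2 := cf_all_fin (fun s : sig => cf_if (s \in SJ)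
    (cf_and (cf_leq (acst 0) (aaw (idx s)))
       (cf_all_fin (fun j' => cf_leq (aff_ee (tag s) (tagged s) ht) (aff_ee (tag s) j' ht))))
    (cf_eq (aaw (idx s)) (acst 0))).
have C3 := cf_all_ord (fun i : 'I_K => cf_eq (aff_sum (index_enum sig)
    (fun s => aff_if (tag s == i) (aaw (idx s)) (acst 0))) (acst 1)).
have C4 := cf_all_ord (fun l : 'I_nu => cf_eq
    (aff_add (affv_gcol ht l) (aff_sum (index_enum sig)
       (fun s => aff_ext (aff_scale (rr' (tag s) (tagged s) 0 l) (aaw (idx s))) (fun v w z => mulrC _ _))))
    (aff_sum (index_enum 'I_kU) (fun k => aff_ext (aff_scale (MU k l) (aaw k)) (fun v w z => mulrC _ _)))).
apply: (cf_ext (cf_and C1 (cf_and C2 (cf_and C3 C4)))) => v w z.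
by split => [[a [b [c d]]]|[a b c d]].
Qed.

Variables (U : 'cV[R]_nu -> Prop) (f : 'cV[R]_nx -> 'cV[R]_nu -> 'cV[R]_nh -> 'cV[R]_npi -> R)
  (h : 'cV[R]_nx -> 'cV[R]_nu -> 'cV[R]_nx).
Hypothesis HUe : forall y, U y <-> mxle (MU *m y) bU.
Hypothesis Hfe : forall x u th pi,
      f x u th pi =
        - ((col_mx x u)^T *m Q *m col_mx x u) 0 0
        + ((col_mx th pi)^T *m H *m col_mx x u) 0 0
        + \sum_(i < K)
            (let e := fun j : 'I_(Js i).+1 =>
                 (F i j *m col_mx (col_mx x u) (col_mx th pi)) 0 0 + zeta i j in
             \big[Num.min/e ord0]_(j < (Js i).+1) e j).
Hypothesis Hhe : forall x u, h x u = A *m x + B *m u + kk.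
Hypothesis HQ : psd Q.

Lemma f_phi x u th pi : f (h x u) u th pi = @phi R nx nu nh npi Q H K Js F zeta A B kk x u th pi.
Proof. by rewrite Hfe Hhe. Qed.

Lemma Uk y : U y <-> forall k, (MU *m y) k 0 <= bU k 0.
Proof.
rewrite HUe; split => hh k; first exact: hh.
by move=> j; rewrite (ord1 j).
Qed.

Lemma argmax_kkt x th pi u : argmax_u U f h x th pi u <->
  U u /\ exists SA SJ lam mu, KKT' x u th pi SA SJ lam mu.
Proof.
split.
  move=> [hu hopt]; split => //.
  apply: kkt_nec; first by apply/Uk.
  by move=> u' /Uk hu'; rewrite -!f_phi; apply: hopt.
move=> [hu [SA [SJ [lam [mu hk]]]]]; split => // u' /Uk hu'.
rewrite !f_phi; exact: kkt_suff HQ hk hu'.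
Qed.

Lemma rep_imp (b : bool) (S : tr -> Prop) : (b -> Rep N S) -> Rep N (fun v => b -> S v).
Proof.
case: b => hb; first by apply: (rep_ext (hb erefl)) => v; split => // /(_ erefl).
by apply: (rep_ext (rep_true R nx nu nh npi N)) => v; split.
Qed.

Definition wf (lam : 'I_kU -> R) (mu : sig -> R) : nat -> R := fun i =>
  if @insub _ (fun i => (i < kU)%N) 'I_kU i is Some k then lam k
  else if @insub _ (fun i => (i < #|{: sig}|)%N) 'I_#|{: sig}| (i - kU)%N is Some r then mu (enum_val r)
  else 0.
Lemma wf_lam lam mu (k : 'I_kU) : wf lam mu k = lam k.
Proof. by rewrite /wf valK. Qed.
Lemma wf_mu lam mu (s : sig) : wf lam mu (idx s) = mu s.
Proof.
rewrite /wf /idx insubF; last by rewrite ltnNge leq_addr.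
by rewrite addKn valK enum_rankK.
Qed.

Variables (X : 'cV[R]_nx -> Prop) (kX : nat) (MX : 'M[R]_(kX, nx)) (bX : 'cV[R]_kX).
Hypothesis HXe : forall y, X y <-> mxle (MX *m y) bX.
Variables (Th : 'cV[R]_nh -> Prop) (kT : nat) (MT : 'M[R]_(kT, nh)) (bT : 'cV[R]_kT).
Hypothesis HTe : forall y, Th y <-> mxle (MT *m y) bT.
Variables (Pi : 'cV[R]_npi -> Prop) (kP mwP mzP : nat) (AP : 'M[R]_(kP, npi))
  (BwP : 'M[R]_(kP, mwP)) (BzP : 'M[R]_(kP, mzP)) (bP : 'cV[R]_kP).
Hypothesis HPe : forall y, Pi y <-> exists w z, mxle (AP *m y + BwP *m w + BzP *m intvec R z) bP.
Variables (g : 'cV[R]_nx -> 'cV[R]_nu -> 'cV[R]_nh -> 'cV[R]_npi -> 'cV[R]_nh)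
  (P : nat) (mB : 'I_P -> nat)
  (Bp : forall i : 'I_P, 'M[R]_(mB i, (nx + nu) + (nh + npi)))
  (psi : forall i : 'I_P, 'cV[R]_(mB i))
  (G : 'I_P -> 'M[R]_(nh, (nx + nu) + (nh + npi))) (chi : 'I_P -> 'cV[R]_nh).
Arguments Bp : clear implicits.
Arguments psi : clear implicits.
Hypothesis Hg1 : forall i x u th pi,
  mxle (Bp i *m col_mx (col_mx x u) (col_mx th pi)) (psi i) ->
  g x u th pi = G i *m col_mx (col_mx x u) (col_mx th pi) + chi i.
Hypothesis Hg3 : forall x u th pi, X x -> U u -> Th th -> Pi pi ->
  exists i, mxle (Bp i *m col_mx (col_mx x u) (col_mx th pi)) (psi i).
Variable c : R.
Hypothesis Hbox : forall v : tr, feasible X U Th Pi f h g N (tx v) (tu v) (tth v) (tpi v) -> box N c v.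

Definition Vt (v : tr) t := col_mx (col_mx (tx v t) (tu v t)) (col_mx (tth v t) (tpi v t)).
Lemma affv_V t : (t <= N)%N -> AffV N (fun v => Vt v t).
Proof.
move=> ht; apply: affv_col; apply: affv_col.
- exact: axv. - exact: auv. - exact: athv. - exact: apiv.
Qed.

Definition pat := ({set 'I_kU} * {set sig})%type.

Definition Ct t (v : tr) := (t <= N)%N ->
  X (tx v t) /\ Th (tth v t) /\ Pi (tpi v t) /\ U (tu v t) /\
      (box N c v /\ (exists p, p \in enum {: pat} /\ exists (w : nat -> R) (z : nat -> int),
           KKT' (tx v t) (tu v t) (tth v t) (tpi v t) p.1 p.2 (fun k : 'I_kU => w k) (fun s => w (idx s)))) /\
      ((t < N)%N -> tx v t.+1 = A *m tx v t + B *m tu v t + kk) /\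
      ((t < N)%N -> box N c v /\ exists i, i \in enum 'I_P /\
           (mxle (Bp i *m Vt v t) (psi i) /\ tth v t.+1 = G i *m Vt v t + chi i)).

Lemma rep_Ct t : Rep N (Ct t).
Proof.
apply: rep_imp => ht.
have R1 := rep_poly HXe (axv ht).
have R2 := rep_poly HTe (athv ht).
have R3 := rep_milpS HPe (apiv ht).
have R4 := rep_poly HUe (auv ht).
have R5 := rep_exists c (enum {: pat}) (fun p : pat => rep_cf (cf_kkt p.1 p.2 ht)).
have R6 : Rep N (fun v : tr => (t < N)%N -> tx v t.+1 = A *m tx v t + B *m tu v t + kk).
  apply: rep_imp => ht'.
  apply: rep_cf0; apply: cf_eq_vec; first exact: axv.
  apply: affv_add; first apply: affv_add.
  - exact: (affv_mul A (axv ht)).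
  - exact: (affv_mul B (auv ht)).
  - exact: affv_const.
have R7 : Rep N (fun v : tr => (t < N)%N -> box N c v /\ exists i, i \in enum 'I_P /\
           (mxle (Bp i *m Vt v t) (psi i) /\ tth v t.+1 = G i *m Vt v t + chi i)).
  apply: rep_imp => ht'.
  apply: (rep_exists c (enum 'I_P)) => i.
  apply: rep_and; first exact: (rep_poly (S := fun y => mxle (Bp i *m y) (psi i)) (fun y => iff_refl _) (affv_V ht)).
  apply: rep_cf0; apply: cf_eq_vec; first exact: athv.
  apply: affv_add; first exact: (affv_mul (G i) (affv_V ht)).
  exact: affv_const.
apply: (rep_ext (rep_and R1 (rep_and R2 (rep_and R3 (rep_and R4 (rep_and R5 (rep_and R6 R7))))))).
by move=> v; split.
Qed.

Lemma rep_feasible : Rep N (fun v : tr => feasible X U Th Pi f h g N (tx v) (tu v) (tth v) (tpi v)).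
Proof.
apply: (rep_ext (rep_and (rep_box nx nu nh npi N c) (rep_all (iota 0 N.+1) rep_Ct))) => v.
split.
  move=> [hb hC] t ht.
  have ht' : t \in iota 0 N.+1 by rewrite mem_iota.
  have [hX [hT [hP [hU [[_ [p [_ [w [_ hK]]]]] [hd hg]]]]]] := hC t ht' ht.
  split => //.
    by apply/argmax_kkt; split => //; exists p.1, p.2, (fun k : 'I_kU => w k), (fun s => w (idx s)).
  move=> hlt; split; first by rewrite Hhe hd.
  have [_ [i [_ [hpi hth]]]] := hg hlt.
  by rewrite hth (Hg1 hpi).
move=> hf; split; first exact: Hbox.
move=> t; rewrite mem_iota add0n => /andP [_ ht] ht2.
have [ham hX hT hP hd] := hf t ht2.
have [hU [SA [SJ [lam [mu hK]]]]] := (argmax_kkt _ _ _ _).1 ham.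
split => //; split => //; split => //; split => //; split.
  split; first exact: Hbox.
  exists (SA, SJ); split; first by rewrite mem_enum.
  exists (wf lam mu), (fun=> 0) => /=.
  have -> : (fun k : 'I_kU => wf lam mu k) = lam by apply: functional_extensionality => k; rewrite wf_lam.
  have -> : (fun s => wf lam mu (idx s)) = mu by apply: functional_extensionality => s; rewrite wf_mu.
  exact: hK.
split.
  by move=> hlt; have [-> _] := hd hlt; rewrite Hhe.
move=> hlt; split; first exact: Hbox.
have [i hi] := Hg3 hX hU hT hP.
exists i; split; first by rewrite mem_enum.
split => //; have [_ ->] := hd hlt; exact: Hg1.
Qed.
End Main.


Theorem proposition1 (R : realType) (nx nu nth npi : nat)
  (X : 'cV[R]_nx -> Prop) (U : 'cV[R]_nu -> Prop)
  (Th : 'cV[R]_nth -> Prop) (Pi : 'cV[R]_npi -> Prop)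
  (f : 'cV[R]_nx -> 'cV[R]_nu -> 'cV[R]_nth -> 'cV[R]_npi -> R)
  (h : 'cV[R]_nx -> 'cV[R]_nu -> 'cV[R]_nx)
  (g : 'cV[R]_nx -> 'cV[R]_nu -> 'cV[R]_nth -> 'cV[R]_npi -> 'cV[R]_nth)
  (pd pc : nat) (D : 'M[R]_(pd, nx)) (C : 'M[R]_(pc, nu))
  (nmx nmu : nat) (tm : 'I_nmx.+1 -> nat) (tau : 'I_nmu.+1 -> nat)
  (* (A1) *)
  (HX : polyhedron X) (HXb : bounded_set X)
  (HU : polyhedron U) (HUb : bounded_set U)
  (HTh : polyhedron Th) (HThb : bounded_set Th)
  (HPi : milp_set Pi) (HPib : bounded_set Pi) (HPic : closed_set Pi)
  (* (A2) *)
  (Hf : f_form f)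
  (Hfx : forall u th pi, U u -> Th th -> Pi pi -> concave_on X (fun x => f x u th pi))
  (Hfu : forall x th pi, X x -> Th th -> Pi pi -> strictly_concave_on U (fun u => f x u th pi))
  (Hfth : forall x u pi, X x -> U u -> Pi pi -> concave_on Th (fun th => f x u th pi))
  (* (A3) *)
  (Hh : h_affine h)
  (Hhs : forall x', X x' -> exists x u, X x /\ U u /\ h x u = x')
  (Hg : g_pwa X U Th Pi g)
  (Hgs : forall th', Th th' -> exists x u th pi, [/\ X x, U u, Th th, Pi pi & g x u th pi = th'])
  (* (A5) *)
  (Hobs : observable X U Th Pi f h g D C tm tau) :
  forall N : nat, milp_traj N (feasible X U Th Pi f h g N).
Proof.
move=> N.
case: HX => kX [MX [bX HXe]]; case: HU => kU [MU [bU HUe]].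
case: HTh => kT [MT [bT HTe]].
case: HPi => kP [mwP [mzP [AP [BwP [BzP [bP HPe]]]]]].
case: Hf => Q [H [K [Js [F [zeta [HQ Hfe]]]]]].
case: Hh => A [B [kk Hhe]].
case: Hg => P [mB [Bp [psi [G [chi Hg']]]]].
cbv zeta in Hg'; case: Hg' => Hg1 [_ Hg3].
case: HXb => cX HcX; case: HUb => cU HcU; case: HThb => cT HcT; case: HPib => cP HcP.
set c := `|cX| + `|cU| + `|cT| + `|cP|.
have Hbox : forall v : traj R nx nu nth npi,
    feasible X U Th Pi f h g N (tx v) (tu v) (tth v) (tpi v) -> box N c v.
  move=> v hf t ht; have [[hU _] hX hT hP _] := hf t ht.
  have lc : forall a : R, a <= `|a| by move=> a; apply: ler_norm.
  split => j.
  - apply: le_trans (HcX _ hX j) _; rewrite /c; move: (lc cX) (normr_ge0 cU) (normr_ge0 cT) (normr_ge0 cP); lra.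
  - apply: le_trans (HcU _ hU j) _; rewrite /c; move: (lc cU) (normr_ge0 cX) (normr_ge0 cT) (normr_ge0 cP); lra.
  - apply: le_trans (HcT _ hT j) _; rewrite /c; move: (lc cT) (normr_ge0 cU) (normr_ge0 cX) (normr_ge0 cP); lra.
  - apply: le_trans (HcP _ hP j) _; rewrite /c; move: (lc cP) (normr_ge0 cU) (normr_ge0 cT) (normr_ge0 cX); lra.
have Hrep := rep_feasible HUe Hfe Hhe HQ HXe HTe HPe Hg1 Hg3 Hbox.
have [k [mw [mz [Ax [Au [Ath [Api [Bw [Bz [b Hm]]]]]]]]]] := rep_milp Hrep.
exists k, mw, mz, Ax, Au, Ath, Api, Bw, Bz, b => x u th pi.
exact: (Hm (Traj x u th pi)).
Qed.
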